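(* Let $\mathcal M$ be a time-dependent finite-horizon MDP accessed through a quantum generative model $\mathcal G$, and let $\epsilon\in(0,\sqrt H]$ and $\delta\in(0,1)$. Run the algorithm QVI-4$(\mathcal M,\epsilon,\delta)$ described in the context. Then, with probability at least $1-\delta$, its outputs satisfy, for all $h\in[H]$ (componentwise), $V_h^*-\epsilon\le\hat V_h\le V_h^{\hat\pi}\le V_h^*$ and $Q_h^*-\epsilon\le\hat Q_h\le Q_h^{\hat\pi}\le Q_h^*$.
   Context: Write $[H]=\{0,\dots,H-1\}$. The MDP $\mathcal M=(\mathcal S,\mathcal A,\{P_h\},\{r_h\},H)$ has finite $\mathcal S,\mathcal A$ with $S=|\mathcal S|$ and $A=|\mathcal A|$, known rewards $r_h(s,a)\in[0,1]$, and transitions $P_h(\cdot\mid s,a)$. Write $P_{h|s,a}=(P_h(s'\mid s,a))_{s'}$. A policy is $\pi:\mathcal S\times[H]\to\mathcal A$. Value functions: - $V_h^\pi(s)=\mathbb E[\sum_{t=h}^{H-1}r_t(s_t,a_t)\mid s_h=s]$, with $a_t=\pi(s_t,t)$ and $s_{t+1}\sim P_t(\cdot\mid s_t,a_t)$. - $Q_h^\pi(s,a)$ is defined the same way but with $a_h=a$, so $Q_h^\pi(s,a)=r_h(s,a)+P_{h|s,a}^{\mathrm T}V^\pi_{h+1}$, with $V_H^\pi=0$. - $V_h^*=\max_\pi V_h^\pi$ and $Q_h^*=\max_\pi Q_h^\pi$. The quantum generative model is the unitary $\mathcal G:|s\rangle|a\rangle|h\rangle|0\rangle|0\rangle\mapsto|s\rangle|a\rangle|h\rangle\sum_{s'}\sqrt{P_h(s'\mid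 s,a)}|s'\rangle|j_{s'}\rangle$, with arbitrary auxiliary states $|j_{s'}\rangle$. Subroutines (both estimate $p^{\mathrm T}f$, given $U_p:|0\rangle|0\rangle\mapsto\sum_x\sqrt{p_x}|x\rangle|j_x\rangle$, here $\mathcal G$ at $(s,a,h)$, and a binary oracle for $f$): - QME1$_\zeta(p^{\mathrm T}f,\eta)$: assumes $0\le f\le u$ for a supplied $u$. Returns an estimate with error less than $\eta$ with probability greater than $1-\zeta$, using $O((u/\eta+\sqrt{u/\eta})\log(1/\zeta))$ queries. - QME2$_\zeta(p^{\mathrm T}f,\eta)$: assumes $\mathrm{Var}_{x\sim p}f(x)\le\sigma^2$ for a supplied $\sigma$ with $\eta\in(0,4\sigma)$. Returns an estimate with error less than $\eta$ with probability greater than $1-\zeta$, using $O((\sigma/\eta)\log^2(\sigma/\eta)\log(1/\zeta))$ queries. Algorithm QVI-4$(\mathcal M,\epsilon,\delta)$: - Set $K=\lceil\log_2(H/\epsilon)\rceil+1$, $\zeta=\delta/(4KHSA)$, $c=0.001$, $b=1$. - Set $V^{(0)}_{0,h}=\mathbf 0$ for all $h$, and let $\pi^{(0)}_0(s,h)$ be arbitrary actions. - For $k=0,\dots,K-1$: - Set $\epsilon_k=H/2^k$, $V_{k,H}=\mathbf 0$, $V^{(0)}_{k,H}=\mathbf 0$. - For all $(s,a,h)$: set $y_{k,h}(s,a)=\max\{\mathrm{QME1}_\zeta(P_{h|s,a}^{\mathrm T}(V^{(0)}_{k,h+1})^2,b)-(\mathrm{QME1}_\zeta(P_{h|s,a}^{\mathrm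 T}V^{(0)}_{k,h+1},b/H))^2,\,0\}$, with range bounds $u=H^2$ and $u=H$ respectively. - For all $(s,a,h)$: with $\eta_{k,h}(s,a)=c\epsilon H^{-1.5}\sqrt{y_{k,h}(s,a)+4b}$, set $x_{k,h}(s,a)=\mathrm{QME2}_\zeta(P_{h|s,a}^{\mathrm T}V^{(0)}_{k,h+1},\eta_{k,h}(s,a))-\eta_{k,h}(s,a)$, with variance bound $\sigma^2=y_{k,h}(s,a)+4b$. - For $h=H-1,\dots,0$: - For all $(s,a)$: set $g_{k,h}(s,a)=\mathrm{QME1}_\zeta(P_{h|s,a}^{\mathrm T}(V_{k,h+1}-V^{(0)}_{k,h+1}),c\epsilon_k/H)-c\epsilon_k/H$, with $u=2\epsilon_k$. - Set $Q_{k,h}(s,a)=\max\{r_h(s,a)+x_{k,h}(s,a)+g_{k,h}(s,a),0\}$. - Set $V_{k,h}(s)=\max_aQ_{k,h}(s,a)$ and $\pi_k(s,h)=\arg\max_aQ_{k,h}(s,a)$. - If $\max_aQ_{k,h}(s,a)\le V^{(0)}_{k,h}(s)$, reset $V_{k,h}(s)=V^{(0)}_{k,h}(s)$ and $\pi_k(s,h)=\pi^{(0)}_k(s,h)$. - Set $V^{(0)}_{k+1,h}=V_{k,h}$ and $\pi^{(0)}_{k+1}(\cdot,h)=\pi_k(\cdot,h)$ for all $h$. - Return $\hat\pi=\pi_{K-1}$, $\hat V_h=V_{K-1,h}$, $\hat Q_h=Q_{K-1,h}$. *)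

(* Defs.v *)
From HB Require Import structures.
From mathcomp Require Import all_boot all_order all_algebra.
From mathcomp Require Import all_classical all_reals all_analysis.
Set Implicit Arguments. Unset Strict Implicit. Unset Printing Implicit Defensive.
Import Order.TTheory GRing.Theory Num.Theory.
Local Open Scope ring_scope.

(* Finitely supported probability distributions (finite-outcome         *)
(* randomised procedures), as weighted lists (weight, outcome).         *)
Section Dist.
Variable R : realType.

Definition dist (X : Type) := seq (R * X).
Definition dret (X : Type) (x : X) : dist X := [:: (1, x)].
Definition dbind (X Y : Type) (d : dist X) (f : X -> dist Y) : dist Y :=
  flatten [seq [seq (p.1 * q.1, q.2) | q <- f p.2] | p <- d].
Definition prob (X : Type) (d : dist X) (E : X -> bool) : R :=
  \sum_(p <- d | E p.2) p.1.
Definition dvalid (X : Type) (d : dist X) : bool :=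
  all (fun p => 0 <= p.1) d && (\sum_(p <- d) p.1 == 1).

(* independent draws, one for each index of a finite type *)
Definition drawall (I : finType) (f : I -> dist R) : dist (I -> R) :=
  foldr (fun i acc => dbind (f i) (fun v =>
           dbind acc (fun g => dret (fun j => if j == i then v else g j))))
        (dret (fun _ => 0)) (enum I).
End Dist.
Arguments dret {R X}.
Arguments dbind {R X Y}.
Arguments prob {R X}.
Arguments dvalid {R X}.
Arguments drawall {R I}.

(* The MDP, value functions.  Time steps are natural numbers; only     *)
Section MDP.
Variables (R : realType) (S A : finType) (H : nat).
Variable P : nat -> S -> A -> S -> R.   (* P h s a s' = P_h(s'|s,a) *)
Variable r : nat -> S -> A -> R.

Definition policy := {ffun 'I_H -> {ffun S -> A}}.

Definition Pmean (h : nat) (s : S) (a : A) (f : S -> R) : R :=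
  \sum_(s' : S) P h s a s' * f s'.
Definition Pvar (h : nat) (s : S) (a : A) (f : S -> R) : R :=
  Pmean h s a (fun s' => f s' ^+ 2) - (Pmean h s a f) ^+ 2.

(* backward (Bellman) evaluation; m = H - h steps remaining *)
Fixpoint Vfuel (pi : policy) (m h : nat) (s : S) : R :=
  match m with
  | 0 => 0
  | m'.+1 =>
    match (insub h : option 'I_H) with
    | Some i => r h s (pi i s) + Pmean h s (pi i s) (Vfuel pi m' h.+1)
    | None => 0
    end
  end.

Definition Vpi (pi : policy) (h : nat) (s : S) : R := Vfuel pi (H - h) h s.
Definition Qpi (pi : policy) (h : nat) (s : S) (a : A) : R :=
  r h s a + Pmean h s a (Vpi pi h.+1).

(* V*_h = max_pi V^pi_h, Q*_h = max_pi Q^pi_h (all values are >= 0) *)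
Definition Vstar (h : nat) (s : S) : R := \big[Num.max/0]_(pi : policy) Vpi pi h s.
Definition Qstar (h : nat) (s : S) (a : A) : R :=
  \big[Num.max/0]_(pi : policy) Qpi pi h s a.

(* Abstract quantum mean estimators (finite-outcome randomised         *)
(* procedures).  est1 s a h f u eta zeta = output distribution of       *)
(* QME1_zeta(P_{h|s,a}^T f, eta) with range bound u;                    *)
(* est2 s a h f sigma eta zeta = output distribution of                 *)
(* QME2_zeta(P_{h|s,a}^T f, eta) with variance bound sigma^2.           *)
Definition QME1_spec
  (est1 : S -> A -> nat -> (S -> R) -> R -> R -> R -> dist R R) : Prop :=
  (forall s a h f u eta zeta, dvalid (est1 s a h f u eta zeta)) /\
  (forall s a h f u eta zeta, (h < H)%N ->
     (forall s', 0 <= f s' <= u) -> 0 < eta -> 0 < zeta < 1 ->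
     1 - zeta < prob (est1 s a h f u eta zeta)
                     (fun v => `|v - Pmean h s a f| < eta)).

Definition QME2_spec
  (est2 : S -> A -> nat -> (S -> R) -> R -> R -> R -> dist R R) : Prop :=
  (forall s a h f sigma eta zeta, dvalid (est2 s a h f sigma eta zeta)) /\
  (forall s a h f sigma eta zeta, (h < H)%N ->
     Pvar h s a f <= sigma ^+ 2 -> 0 < eta < 4 * sigma -> 0 < zeta < 1 ->
     1 - zeta < prob (est2 s a h f sigma eta zeta)
                     (fun v => `|v - Pmean h s a f| < eta)).

Variables (est1 est2 : S -> A -> nat -> (S -> R) -> R -> R -> R -> dist R R).
Variables (eps delta : R).

Definition QVI_K : nat := (`|Num.ceil (ln (H%:R / eps) / ln 2)| + 1)%N.
Definition QVI_zeta : R := delta / (4 * QVI_K * H * #|S| * #|A|)%N%:R.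
Definition QVI_c : R := 1 / 1000.
Definition QVI_b : R := 1.

Definition out_t := (policy * (nat -> S -> R) * (nat -> S -> A -> R))%type.
Definition loop_t := ((nat -> S -> R) * (nat -> S -> A -> R) * ('I_H -> S -> A))%type.

(* iteration k, given V^{(0)}_k = V0 and pi^{(0)}_k = pi0;
   returns (pi_k, V_k, Q_k) *)
Definition QVI_iter (k : nat) (pi0 : policy) (V0 : nat -> S -> R) : dist R out_t :=
  let zeta := QVI_zeta in
  let c := QVI_c in let b := QVI_b in
  let epsk : R := H%:R / 2 ^+ k in
  dbind (drawall (fun i : 'I_H * S * A =>
     let h := i.1.1 in let s := i.1.2 in let a := i.2 in
     dbind (est1 s a h (fun s' => V0 h.+1 s' ^+ 2) (H%:R ^+ 2) b zeta) (fun m2 =>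
     dbind (est1 s a h (V0 h.+1) H%:R (b / H%:R) zeta) (fun m1 =>
     dret (Num.max (m2 - m1 ^+ 2) 0))))) (fun y =>
  let eta i := c * eps / (H%:R * Num.sqrt H%:R) * Num.sqrt (y i + 4 * b) in
  dbind (drawall (fun i : 'I_H * S * A =>
     let h := i.1.1 in let s := i.1.2 in let a := i.2 in
     dbind (est2 s a h (V0 h.+1) (Num.sqrt (y i + 4 * b)) (eta i) zeta) (fun m =>
     dret (m - eta i)))) (fun x =>
  (* backward loop h = H-1, ..., 0 : enum 'I_H is increasing, so the
     innermost (first executed) step of this monadic foldr is h = H-1 *)
  let step (hi : 'I_H) (st : loop_t) : dist R loop_t :=
    let: (V, Q, pi) := st in
    dbind (drawall (fun sa : S * A =>
      dbind (est1 sa.1 sa.2 hi (fun s' => V hi.+1 s' - V0 hi.+1 s')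
                  (2 * epsk) (c * epsk / H%:R) zeta) (fun m =>
      dret (m - c * epsk / H%:R)))) (fun g =>
    let Qh s a := Num.max (r hi s a + x (hi, s, a) + g (s, a)) 0 in
    let mx s := \big[Num.max/0]_(a : A) Qh s a in
    let am s := Order.arg_max (pi0 hi s) xpredT (Qh s) in
    dret ((fun h' s => if h' == hi :> nat then
                         (if mx s <= V0 hi s then V0 hi s else mx s)
                       else V h' s),
          (fun h' s a => if h' == hi :> nat then Qh s a else Q h' s a),
          (fun h' s => if h' == hi then
                         (if mx s <= V0 hi s then pi0 hi s else am s)
                       else pi h' s))) in
  dbind (foldr (fun hi acc => dbind acc (step hi))
               (dret ((fun _ _ => 0), (fun _ _ _ => 0), (fun h s => pi0 h s)))
               (enum 'I_H)) (fun st =>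
  let: (V, Q, pi) := st in
  dret ([ffun h => [ffun s => pi h s]], V, Q)))).

Fixpoint QVI_run (piinit : policy) (k : nat) : dist R out_t :=
  match k with
  | 0 => dret (piinit, (fun _ _ => 0), (fun _ _ _ => 0))
  | k'.+1 => dbind (QVI_run piinit k') (fun o =>
               let: (pi, V, _) := o in QVI_iter k' pi V)
  end.

Definition QVI4 (piinit : policy) : dist R out_t := QVI_run piinit QVI_K.

Definition QVI_good (o : out_t) : bool :=
  let: (hpi, hV, hQ) := o in
  [forall h : 'I_H, [forall s : S,
     (Vstar h s - eps <= hV h s) && (hV h s <= Vpi hpi h s) && (Vpi hpi h s <= Vstar h s)
     && [forall a : A,
       (Qstar h s a - eps <= hQ h s a) && (hQ h s a <= Qpi hpi h s a)
       && (Qpi hpi h s a <= Qstar h s a)]]].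
End MDP.

(* Main.v *)
Require Import Defs.
From HB Require Import structures.
From mathcomp Require Import all_boot all_order all_algebra.
From mathcomp Require Import all_classical all_reals all_analysis.
Import Order.TTheory GRing.Theory Num.Theory.
Local Open Scope ring_scope.
From mathcomp Require Import ring lra zify.

Module QVIProof.
Set Implicit Arguments. Unset Strict Implicit. Unset Printing Implicit Defensive.


Section ProbLemmas.
Variable R : realType.

Lemma prob_ret (X : Type) (x : X) (E : X -> bool) :
  prob (dret x : dist R X) E = (E x)%:R.
Proof. by rewrite /prob /dret big_cons big_nil; case: (E x); rewrite ?addr0. Qed.

Lemma prob_bind (X Y : Type) (d : dist R X) (f : X -> dist R Y) (E : Y -> bool) :
  prob (dbind d f) E = \sum_(p <- d) p.1 * prob (f p.2) E.
Proof.
rewrite /prob /dbind big_flatten /= big_map; apply: eq_bigr => p _.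
rewrite big_map /= mulr_sumr big_mkcond /= [RHS]big_mkcond /=.
by apply: eq_bigr => q _; case: (E q.2); rewrite ?mulr0.
Qed.

Definition dnn (X : Type) (d : dist R X) := all (fun p => 0 <= p.1) d.

Lemma prob_ge0 (X : Type) (d : dist R X) E : dnn d -> 0 <= prob d E.
Proof.
rewrite /prob; elim: d => [|p d IH] /=; first by rewrite big_nil.
case/andP=> p0 /IH H; rewrite big_cons; case: (E p.2) => //.
exact: addr_ge0.
Qed.

Lemma dvalid_nn (X : Type) (d : dist R X) : dvalid d -> dnn d.
Proof. by case/andP. Qed.

Lemma dvalid_mass (X : Type) (d : dist R X) : dvalid d -> prob d xpredT = 1.
Proof. by case/andP=> _ /eqP. Qed.

Lemma prob_mono (X : Type) (d : dist R X) (E E' : X -> bool) :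
  dnn d -> (forall x, E x -> E' x) -> prob d E <= prob d E'.
Proof.
move=> + HE; rewrite /prob; elim: d => [|p d IH] /=; first by rewrite !big_nil.
case/andP=> p0 /IH H; rewrite !big_cons.
case Ep: (E p.2); first by rewrite (HE _ Ep) lerD2l.
case: (E' p.2) => //; by rewrite -[X in X <= _]add0r; apply: lerD.
Qed.

Lemma prob_le1 (X : Type) (d : dist R X) E : dvalid d -> prob d E <= 1.
Proof.
move=> Hv; rewrite -(dvalid_mass Hv); apply: prob_mono => //; exact: dvalid_nn.
Qed.

Lemma dvalid_ret (X : Type) (x : X) : dvalid (dret x : dist R X).
Proof.
rewrite /dvalid /dret /= ler01 /=; apply/eqP.
by rewrite big_cons big_nil addr0.
Qed.

Lemma dnn_bind (X Y : Type) (d : dist R X) (f : X -> dist R Y) :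
  dnn d -> (forall x, dnn (f x)) -> dnn (dbind d f).
Proof.
move=> + Hf; rewrite /dbind /dnn; elim: d => [|p d IH] //=.
case/andP=> p0 /IH H; rewrite all_cat H andbT.
move: (Hf p.2); rewrite /dnn; elim: (f p.2) => [|q l IHl] //=.
case/andP=> q0 /IHl ->; rewrite andbT; exact: mulr_ge0.
Qed.

Lemma dvalid_bind (X Y : Type) (d : dist R X) (f : X -> dist R Y) :
  dvalid d -> (forall x, dvalid (f x)) -> dvalid (dbind d f).
Proof.
move=> Hd Hf; apply/andP; split.
  apply: dnn_bind; [exact: dvalid_nn | move=> x; exact: dvalid_nn].
apply/eqP; have := prob_bind d f xpredT; rewrite /prob => ->.
rewrite -(dvalid_mass Hd) /prob; apply: eq_bigr => p _.
by have := dvalid_mass (Hf p.2); rewrite /prob => ->; rewrite mulr1.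
Qed.

Lemma prob_bind_ge (X Y : Type) (d : dist R X) (f : X -> dist R Y)
   (G : X -> bool) (E : Y -> bool) (e1 e2 : R) :
  dvalid d -> (forall x, dnn (f x)) -> 0 <= e2 ->
  1 - e1 <= prob d G ->
  (forall x, G x -> 1 - e2 <= prob (f x) E) ->
  1 - (e1 + e2) <= prob (dbind d f) E.
Proof.
move=> Hd Hf e2ge0 HG HE; rewrite prob_bind.
have H1 : (1 - e2) * prob d G <= \sum_(p <- d) p.1 * prob (f p.2) E.
  have := dvalid_nn Hd; rewrite {1}/prob mulr_sumr big_mkcond /=.
  elim: d {Hd HG} => [|p d IH] /=; first by rewrite !big_nil.
  case/andP=> p1 /IH {}IH; rewrite !big_cons; apply: lerD => //.
  case Gp: (G p.2).
    by rewrite mulrC; apply: ler_wpM2l => //; apply: HE.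
  by apply: mulr_ge0 => //; apply: prob_ge0.
apply: le_trans H1.
have := prob_le1 G Hd; have := prob_ge0 G (dvalid_nn Hd).
move: HG; set q := prob d G => HG q0 q1.
have : e2 * q <= e2 by rewrite -[X in _ <= X]mulr1; apply: ler_wpM2l.
lra.
Qed.

Lemma prob_ret_ge (X : Type) (x : X) (E : X -> bool) e :
  0 <= e -> E x -> 1 - e <= prob (dret x : dist R X) E.
Proof. move=> e0 Ex; rewrite prob_ret Ex /=; lra. Qed.

Definition drawstep (I : finType) (f : I -> dist R R) (i : I) (acc : dist R (I -> R)) :=
  dbind (f i) (fun v => dbind acc (fun g => dret (fun j => if j == i then v else g j))).

Lemma drawall_foldr (I : finType) (f : I -> dist R R) :
  drawall f = foldr (drawstep f) (dret (fun _ => 0)) (enum I).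
Proof. by []. Qed.

Lemma dvalid_drawall (I : finType) (f : I -> dist R R) :
  (forall i, dvalid (f i)) -> dvalid (drawall f).
Proof.
move=> Hf; rewrite drawall_foldr; elim: (enum I) => [|i l IH] /=.
  exact: dvalid_ret.
apply: dvalid_bind => // v; apply: dvalid_bind => // g; exact: dvalid_ret.
Qed.

Lemma drawall_ge (I : finType) (f : I -> dist R R) (E : I -> R -> bool) (e : R) :
  0 <= e -> (forall i, dvalid (f i)) ->
  (forall i, 1 - e <= prob (f i) (E i)) ->
  1 - #|I|%:R * e <= prob (drawall f) (fun g => [forall i, E i (g i)]).
Proof.
move=> e0 Hf HE.
suff : 1 - (size (enum I))%:R * e <=
   prob (foldr (drawstep f) (dret (fun _ => 0)) (enum I))
     (fun g => all (fun j => E j (g j)) (enum I)).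
  rewrite -cardE => H; apply: (le_trans H); apply: prob_mono.
    apply: dvalid_nn; exact: dvalid_drawall.
  move=> g /seq.allP Hg; apply/forallP => i; apply: Hg; by rewrite mem_enum.
elim: (enum I) => [|i l IH] /=.
  by apply: prob_ret_ge => //; rewrite mul0r.
have Hv : forall l', dvalid (foldr (drawstep f) (dret (fun _ => 0)) l').
  elim=> [|i' l' IH'] /=; first exact: dvalid_ret.
  apply: dvalid_bind => // v; apply: dvalid_bind => // g; exact: dvalid_ret.
rewrite /drawstep -/(drawstep f).
have -> : 1 - (size l).+1%:R * e = 1 - (e + ((size l)%:R * e + 0)).
  by rewrite -nat1r mulrDl mul1r addr0.
apply: (prob_bind_ge (G := E i)) => //.
- by move=> v; apply: dvalid_nn; apply: dvalid_bind => // g; exact: dvalid_ret.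
- by apply: addr_ge0 => //; apply: mulr_ge0.
move=> v Ev.
apply: (prob_bind_ge (G := fun g => all (fun j => E j (g j)) l)) => //.
- by move=> g; apply: dvalid_nn; exact: dvalid_ret.
move=> g /seq.allP Hg; apply: prob_ret_ge => //=.
rewrite eqxx Ev /=; apply/seq.allP => j jl.
by case: eqP => [->|_] //; apply: Hg.
Qed.

End ProbLemmas.


Lemma sqrt_cs (R : realType) (a b m : R) : 0 <= a -> 0 <= b -> 0 <= m ->
  Num.sqrt a + Num.sqrt (m * b) <= Num.sqrt ((1 + m) * (a + b)).
Proof.
move=> a0 b0 m0; rewrite sqrtrM //.
have hu := sqrtr_ge0 a; have hv := sqrtr_ge0 b; have hw := sqrtr_ge0 m.
have ea := sqr_sqrtr a0; have eb := sqr_sqrtr b0; have em := sqr_sqrtr m0.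
set u := Num.sqrt a in hu ea *; set v := Num.sqrt b in hv eb *;
set w := Num.sqrt m in hw em *.
have -> : u + w * v = Num.sqrt ((u + w * v) ^+ 2).
  by rewrite sqrtr_sqr ger0_norm //; apply: addr_ge0 => //; apply: mulr_ge0.
apply: ler_wsqrtr; rewrite -ea -eb -em.
have : 0 <= (w * u - v) ^+ 2 by apply: sqr_ge0.
nra.
Qed.

Section MDPL.
Variables (R : realType) (S A : finType) (H : nat) (P : nat -> S -> A -> S -> R).
Hypothesis HP0 : forall h s a s', (h < H)%N -> 0 <= P h s a s'.
Hypothesis HP1 : forall h s a, (h < H)%N -> \sum_(s' : S) P h s a s' = 1.

Lemma back_ind (Pr : nat -> Prop) :
  (forall h, (H <= h)%N -> Pr h) -> (forall i : 'I_H, Pr i.+1 -> Pr i) ->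
  forall h, Pr h.
Proof.
move=> H0 HS h; move: {2}(H - h)%N (erefl (H - h)%N) => n; elim: n h => [|n IH] h e.
  by apply: H0; rewrite -subn_eq0 e.
have hH : (h < H)%N by rewrite -subn_gt0 e.
apply: (HS (Ordinal hH)); apply: IH; rewrite /= subnS e.
by [].
Qed.

Section PM.
Variables (h : nat) (s : S) (a : A).
Local Notation PM := (Pmean P h s a).

Lemma PmeanD (f g : S -> R) : PM (fun x => f x + g x) = PM f + PM g.
Proof. by rewrite /Pmean -big_split; apply: eq_bigr => x _; rewrite mulrDr. Qed.

Lemma PmeanZ c (f : S -> R) : PM (fun x => c * f x) = c * PM f.
Proof. by rewrite /Pmean mulr_sumr; apply: eq_bigr => x _; rewrite mulrCA. Qed.

Lemma PmeanB (f g : S -> R) : PM (fun x => f x - g x) = PM f - PM g.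
Proof. by rewrite /Pmean -sumrB; apply: eq_bigr => x _; rewrite mulrBr. Qed.

Lemma PmeanE (f g : S -> R) : f =1 g -> PM f = PM g.
Proof. by move=> e; rewrite /Pmean; apply: eq_bigr => x _; rewrite e. Qed.

Hypothesis hH : (h < H)%N.

Lemma Pmean_const c : PM (fun _ => c) = c.
Proof. by rewrite /Pmean -mulr_suml HP1 // mul1r. Qed.

Lemma Pmean_le (f g : S -> R) : (forall x, f x <= g x) -> PM f <= PM g.
Proof. by move=> fg; apply: ler_sum => x _; apply: ler_wpM2l => //; apply: HP0. Qed.

Lemma Pmean_ge0 (f : S -> R) : (forall x, 0 <= f x) -> 0 <= PM f.
Proof. by move=> f0; rewrite -(Pmean_const 0); apply: Pmean_le. Qed.

Lemma Pmean_le_const (f : S -> R) c : (forall x, f x <= c) -> PM f <= c.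
Proof. by move=> fc; rewrite -(Pmean_const c); apply: Pmean_le. Qed.

Lemma Pmean_ge_const (f : S -> R) c : (forall x, c <= f x) -> c <= PM f.
Proof. by move=> fc; rewrite -(Pmean_const c); apply: Pmean_le. Qed.

Lemma Pvar_alt (f : S -> R) : Pvar P h s a f = PM (fun x => (f x - PM f) ^+ 2).
Proof.
rewrite /Pvar.
rewrite [RHS](@PmeanE _ (fun x => (f x ^+ 2 + (- (2 * PM f)) * f x) + PM f ^+ 2)); last first.
  by move=> x /=; ring.
rewrite PmeanD PmeanD PmeanZ Pmean_const; ring.
Qed.

Lemma Pvar_ge0 (f : S -> R) : 0 <= Pvar P h s a f.
Proof. by rewrite Pvar_alt; apply: Pmean_ge0 => x; apply: sqr_ge0. Qed.

Lemma Pvar_le2 (f : S -> R) : Pvar P h s a f <= PM (fun x => f x ^+ 2).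
Proof. rewrite /Pvar; have := sqr_ge0 (PM f); lra. Qed.

Lemma Pvar_split (f g : S -> R) :
  Pvar P h s a f <= 2 * Pvar P h s a g + 2 * Pvar P h s a (fun x => f x - g x).
Proof.
rewrite !Pvar_alt -!PmeanZ -PmeanD; apply: Pmean_le => x.
rewrite PmeanB.
set u := g x - PM g; set v := (f x - g x) - (PM f - PM g).
have -> : f x - PM f = u + v by rewrite /u /v; ring.
have : 0 <= (u - v) ^+ 2 by apply: sqr_ge0.
nra.
Qed.

Lemma Pmean_sqrt (f : S -> R) : (forall x, 0 <= f x) ->
  PM (fun x => Num.sqrt (f x)) <= Num.sqrt (PM f).
Proof.
move=> f0; have u0 : 0 <= PM (fun x => Num.sqrt (f x)).
  by apply: Pmean_ge0 => x; apply: sqrtr_ge0.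
rewrite -[X in X <= _]ger0_norm // -sqrtr_sqr; apply: ler_wsqrtr.
have := Pvar_ge0 (fun x => Num.sqrt (f x)); rewrite /Pvar.
rewrite (@PmeanE _ f) //; [lra | by move=> x; rewrite sqr_sqrtr].
Qed.

End PM.

Lemma subSR (i : 'I_H) : ((H - i)%:R : R) = (H - i.+1)%:R + 1.
Proof. by rewrite -subnSK // -addn1 natrD. Qed.

Section Val.
Variable pi : policy S A H.

Lemma Vpi_ord rw (i : 'I_H) s :
  Vpi P rw pi i s = rw i s (pi i s) + Pmean P i s (pi i s) (Vpi P rw pi i.+1).
Proof. by rewrite /Vpi -subnSK //= valK. Qed.

Lemma Vpi_ge rw h s : (H <= h)%N -> Vpi P rw pi h s = 0.
Proof. by rewrite /Vpi -subn_eq0 => /eqP ->. Qed.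

Definition Qv rw (h : nat) s a := rw h s a + Pmean P h s a (Vpi P rw pi h.+1).

Lemma Vpi_Qv rw (i : 'I_H) s : Vpi P rw pi i s = Qv rw i s (pi i s).
Proof. exact: Vpi_ord. Qed.

Lemma Vpi_le rw1 rw2 : (forall h s a, (h < H)%N -> rw1 h s a <= rw2 h s a) ->
  forall h s, Vpi P rw1 pi h s <= Vpi P rw2 pi h s.
Proof.
move=> Hr; apply: back_ind => [h hH s|i IH s]; first by rewrite !Vpi_ge.
rewrite !Vpi_ord; apply: lerD; first exact: Hr.
exact: Pmean_le.
Qed.

Lemma Qv_le rw1 rw2 : (forall h s a, (h < H)%N -> rw1 h s a <= rw2 h s a) ->
  forall (i : 'I_H) s a, Qv rw1 i s a <= Qv rw2 i s a.
Proof.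
move=> Hr i s a; rewrite /Qv; apply: lerD; first exact: Hr.
apply: Pmean_le => // x; exact: Vpi_le.
Qed.

Lemma Vpi_ge0 rw : (forall h s a, (h < H)%N -> 0 <= rw h s a) ->
  forall h s, 0 <= Vpi P rw pi h s.
Proof.
move=> Hr; apply: back_ind => [h hH s|i IH s]; first by rewrite !Vpi_ge.
rewrite !Vpi_ord; apply: addr_ge0; first exact: Hr.
exact: Pmean_ge0.
Qed.

Lemma Vpi_affine (al be : R) rw h s :
  Vpi P (fun h s a => al * rw h s a + be) pi h s = al * Vpi P rw pi h s + be * (H - h)%:R.
Proof.
move: h s; apply: back_ind => [h hH s|i IH s].
  by rewrite !Vpi_ge // (eqP (_ : (H - h == 0)%N)) ?subn_eq0 // mulr0 mulr0 addr0.
rewrite !Vpi_ord (@PmeanE _ _ _ _ (fun x => al * Vpi P rw pi i.+1 x + be * (H - i.+1)%:R)) //.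
rewrite PmeanD PmeanZ Pmean_const // subSR; ring.
Qed.

Lemma Qv_affine (al be : R) rw (i : 'I_H) s a :
  Qv (fun h s a => al * rw h s a + be) i s a = al * Qv rw i s a + be * (H - i)%:R.
Proof.
rewrite /Qv (@PmeanE _ _ _ _ (fun x => al * Vpi P rw pi i.+1 x + be * (H - i.+1)%:R)).
  rewrite PmeanD PmeanZ Pmean_const // subSR; ring.
by move=> x; rewrite Vpi_affine.
Qed.

Lemma Vpi_le_H rw : (forall h s a, (h < H)%N -> rw h s a <= 1) ->
  forall h s, Vpi P rw pi h s <= (H - h)%:R.
Proof.
move=> Hr h s.
have := @Vpi_le rw (fun h s a => 0 * rw h s a + 1) _ h s.
rewrite Vpi_affine mul0r add0r mul1r; apply.
by move=> ? ? ? ?; rewrite mul0r add0r; apply: Hr.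
Qed.

(* Cauchy-Schwarz in Bellman form *)
Section CS.
Variable f : nat -> S -> A -> R.
Hypothesis f0 : forall h s a, (h < H)%N -> 0 <= f h s a.
Let sf := fun h s a => Num.sqrt (f h s a).

Lemma cs_step (i : 'I_H) s a :
  (forall s', Vpi P sf pi i.+1 s' <= Num.sqrt ((H - i.+1)%:R * Vpi P f pi i.+1 s')) ->
  Qv sf i s a <= Num.sqrt ((H - i)%:R * Qv f i s a).
Proof.
move=> IH; rewrite /Qv.
have m0 : (0 : R) <= (H - i.+1)%:R by [].
apply: (@le_trans _ _ (Num.sqrt (f i s a) +
    Num.sqrt (Pmean P i s a (fun x => (H - i.+1)%:R * Vpi P f pi i.+1 x)))).
  apply: lerD => //; apply: (le_trans (@Pmean_le i s a (ltn_ord i) _ _ IH)).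
  apply: Pmean_sqrt => // x; apply: mulr_ge0 => //; exact: Vpi_ge0.
rewrite PmeanZ subSR [(_ + 1)]addrC.
apply: sqrt_cs => //; first exact: f0.
apply: Pmean_ge0 => // x; exact: Vpi_ge0.
Qed.

Lemma cs_V h s : Vpi P sf pi h s <= Num.sqrt ((H - h)%:R * Vpi P f pi h s).
Proof.
move: h s; apply: back_ind => [h hH s|i IH s].
  by rewrite !Vpi_ge // mulr0 sqrtr0.
rewrite !Vpi_Qv; exact: cs_step.
Qed.

Lemma cs_Q (i : 'I_H) s a : Qv sf i s a <= Num.sqrt ((H - i)%:R * Qv f i s a).
Proof. apply: cs_step => s'; exact: cs_V. Qed.
End CS.

(* total variance *)
Section TV.
Variable rw : nat -> S -> A -> R.
Hypothesis rw01 : forall h s a, (h < H)%N -> 0 <= rw h s a <= 1.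
Let sig := fun h s a => Pvar P h s a (Vpi P rw pi h.+1).

Lemma tv_V h s : Vpi P sig pi h s + (Vpi P rw pi h s) ^+ 2 <= ((H - h)%:R) ^+ 2.
Proof.
move: h s; apply: back_ind => [h hH s|i IH s].
  by rewrite !Vpi_ge // expr0n addr0 (eqP (_ : (H - h == 0)%N)) ?subn_eq0 // expr0n.
rewrite !Vpi_ord /sig /Pvar.
set a := pi i s.
have hP := @PmeanD i s a (fun x => Vpi P sig pi i.+1 x) (fun x => Vpi P rw pi i.+1 x ^+ 2).
have hb := @Pmean_le_const i s a (ltn_ord i) _ _ IH.
have w0 : 0 <= Pmean P i s a (Vpi P rw pi i.+1).
  apply: Pmean_ge0 => // x; apply: Vpi_ge0 => h' s' a' h'H; by case/andP: (rw01 s' a' h'H).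
have w1 : Pmean P i s a (Vpi P rw pi i.+1) <= (H - i.+1)%:R.
  by apply: Pmean_le_const => // x; apply: Vpi_le_H => h' s' a' h'H; case/andP: (rw01 s' a' h'H).
have := rw01 s a (ltn_ord i); rewrite subSR.
move: hP hb w0 w1; set m := (H - i.+1)%:R.
set T := Pmean P i s a (Vpi P sig pi i.+1); set W := Pmean P i s a (Vpi P rw pi i.+1).
set W2 := Pmean P i s a (fun x => Vpi P rw pi i.+1 x ^+ 2).
move=> hP hb w0 w1 /andP[r0 r1].
rewrite hP in hb. nra.
Qed.

Lemma tv_Q (i : 'I_H) s a : Qv sig i s a <= ((H - i)%:R) ^+ 2.
Proof.
rewrite /Qv /sig /Pvar.
have hP := @PmeanD i s a (fun x => Vpi P sig pi i.+1 x) (fun x => Vpi P rw pi i.+1 x ^+ 2).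
have hb := @Pmean_le_const i s a (ltn_ord i) _ _ (tv_V i.+1).
have m0 : (0:R) <= (H - i.+1)%:R by [].
rewrite subSR.
move: hP hb m0; set m := (H - i.+1)%:R.
set T := Pmean P i s a (Vpi P sig pi i.+1); set W := Pmean P i s a (Vpi P rw pi i.+1).
set W2 := Pmean P i s a (fun x => Vpi P rw pi i.+1 x ^+ 2).
move=> hP hb m0; rewrite hP in hb.
have := sqr_ge0 W; nra.
Qed.
End TV.
End Val.

Lemma bigmax_eq (F : A -> R) a0 : (forall a, F a <= F a0) -> 0 <= F a0 ->
  \big[Num.max/0]_(a : A) F a = F a0.
Proof.
move=> Fa F0; apply/le_anti/andP; split.
  by apply: bigmax_le.
exact: le_bigmax.
Qed.

Section Opt.
Variable r : nat -> S -> A -> R.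
Hypothesis r01 : forall h s a, (h < H)%N -> 0 <= r h s a <= 1.
Variable piinit : policy S A H.

Fixpoint Uf (m h : nat) (s : S) : R :=
  match m with
  | 0 => 0
  | m'.+1 => if (h < H)%N then
      \big[Num.max/0]_(a : A) (r h s a + Pmean P h s a (Uf m' h.+1)) else 0
  end.
Definition U h s := Uf (H - h) h s.
Definition QU h s a := r h s a + Pmean P h s a (U h.+1).

Lemma U_ord (i : 'I_H) s : U i s = \big[Num.max/0]_(a : A) QU i s a.
Proof. by rewrite /U -subnSK //= ltn_ord. Qed.

Lemma U_ge h s : (H <= h)%N -> U h s = 0.
Proof. by rewrite /U -subn_eq0 => /eqP ->. Qed.

Definition pistar : policy S A H :=
  [ffun i => [ffun s => [arg max_(a > piinit i s) QU i s a]%O]].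

Lemma QU_le (i : 'I_H) s a : QU i s a <= QU i s (pistar i s).
Proof.
rewrite /pistar !ffunE.
by case: (@arg_maxP _ _ _ (piinit i s) xpredT (QU i s)) => // j _; apply.
Qed.

Lemma U_ge0 h s : 0 <= U h s.
Proof.
move: h s; apply: back_ind => [h hH s|i IH s]; first by rewrite U_ge.
rewrite U_ord; apply: le_trans (le_bigmax _ _ (piinit i s)).
apply: addr_ge0; first by case/andP: (r01 s (piinit i s) (ltn_ord i)).
exact: Pmean_ge0.
Qed.

Lemma QU_ge0 (i : 'I_H) s a : 0 <= QU i s a.
Proof.
apply: addr_ge0; first by case/andP: (r01 s a (ltn_ord i)).
by apply: Pmean_ge0 => // x; apply: U_ge0.
Qed.

Lemma U_pistar (i : 'I_H) s : U i s = QU i s (pistar i s).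
Proof. rewrite U_ord; apply: bigmax_eq; [exact: QU_le | exact: QU_ge0]. Qed.

Lemma Vpi_pistar h s : Vpi P r pistar h s = U h s.
Proof.
move: h s; apply: back_ind => [h hH s|i IH s]; first by rewrite U_ge // Vpi_ge.
rewrite Vpi_ord U_pistar /QU; congr (_ + _); apply: PmeanE => x; exact: IH.
Qed.

Lemma Vpi_leU (pi : policy S A H) h s : Vpi P r pi h s <= U h s.
Proof.
move: h s; apply: back_ind => [h hH s|i IH s]; first by rewrite U_ge // Vpi_ge.
rewrite Vpi_ord U_ord; apply: le_trans (le_bigmax _ _ (pi i s)).
by rewrite /QU lerD2l; apply: Pmean_le.
Qed.

Lemma Vstar_U h s : Vstar H P r h s = U h s.
Proof.
apply/le_anti/andP; split.
  apply: bigmax_le; [exact: U_ge0 | move=> pi _; exact: Vpi_leU].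
rewrite /Vstar -{1}Vpi_pistar. exact: (le_bigmax 0 (fun pi => Vpi P r pi h s) pistar).
Qed.

Lemma Qstar_QU (i : 'I_H) s a : Qstar H P r i s a = QU i s a.
Proof.
apply/le_anti/andP; split.
  apply: bigmax_le; first exact: QU_ge0.
  move=> pi _; rewrite /Qpi /QU lerD2l; apply: Pmean_le => // x; exact: Vpi_leU.
rewrite /Qstar; apply: le_trans (le_bigmax _ _ pistar).
rewrite /Qpi /QU lerD2l; rewrite (@PmeanE _ _ _ _ (U i.+1)) //.
by move=> x; rewrite Vpi_pistar.
Qed.

End Opt.

End MDPL.


Lemma num_t1 (R : realType) (c Hn m e : R) : 0 <= c -> 100 * c <= 1 -> 0 < Hn -> 0 <= m -> m <= Hn -> 0 < e ->
  (2 * c * e * m) / Hn <= e / 2.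
Proof.
move=> c0 c1 Hp m0 mH e0; rewrite ler_pdivrMr //.
have h1 : e * m <= e * Hn by apply: ler_wpM2l; lra.
have h2 : 0 <= e * m by apply: mulr_ge0; lra.
have h3 : c * (e * m) <= 1/100 * (e * Hn) by apply: ler_pM => //; lra.
have -> : 2 * c * e * m = 2 * (c * (e * m)) by ring.
have -> : e / 2 * Hn = 1/2 * (e * Hn) by field.
lra.
Qed.

Lemma num_sq (R : realType) (x y : R) : 0 <= x -> 0 <= y -> x ^+ 2 <= y ^+ 2 -> x <= y.
Proof. by move=> x0 y0; rewrite ler_pXn2r // nnegrE. Qed.

Lemma num_key (R : realType) (c Hn e ep z q : R) : 0 <= c -> 100 * c <= 1 -> 1 <= Hn -> 0 < e -> 0 < ep ->
  ep ^+ 2 <= Hn -> ep ^+ 2 <= 4 * e ^+ 2 -> z ^+ 2 = 2 * Hn + 8 * e ^+ 2 + 8 -> q ^+ 2 = Hn ->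
  (2 * c * ep * z) ^+ 2 <= (e / 2 * q) ^+ 2.
Proof.
move=> c0 c1 H1 e0 ep0 h1 h2 ez eq.
rewrite !exprMn ez eq.
set X := e ^+ 2 * Hn.
have X0 : 0 <= X by apply: mulr_ge0 => //; [apply: sqr_ge0 | lra].
have a1 : ep ^+ 2 * Hn <= 4 * X by rewrite /X mulrA; apply: ler_wpM2r; lra.
have a2 : ep ^+ 2 * e ^+ 2 <= X by rewrite /X mulrC; apply: ler_wpM2l => //; apply: sqr_ge0.
have a3 : 4 * e ^+ 2 <= 4 * X.
  rewrite /X -[X in X <= _]mulr1 -mulrA; apply: ler_wpM2l; first lra.
  by apply: ler_wpM2l => //; apply: sqr_ge0.
set W := 2 * (ep ^+ 2 * Hn) + 8 * (ep ^+ 2 * e ^+ 2) + 8 * ep ^+ 2.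
have W0 : 0 <= W by rewrite /W; have := sqr_ge0 ep; have := sqr_ge0 e; nra.
have hW : W <= 48 * X by rewrite /W; lra.
have hC : c ^+ 2 <= 1 / 10000.
  have : c <= 1/100 by lra.
  move=> cc; have := ler_pM c0 c0 cc cc; rewrite expr2; lra.
have hCW : c ^+ 2 * W <= 1/10000 * (48 * X) by apply: ler_pM => //; apply: sqr_ge0.
have -> : 2 ^+ 2 * c ^+ 2 * ep ^+ 2 * (2 * Hn + 8 * e ^+ 2 + 8) = 4 * (c ^+ 2 * W) by rewrite /W; ring.
have -> : e ^+ 2 * 2^-1 ^+ 2 * Hn = 1/4 * X by rewrite /X; field.
lra.
Qed.

Lemma final_num (R : realType) (c Hn m e ep : R) : 0 <= c -> 100 * c <= 1 -> 1 <= Hn -> 0 <= m -> m <= Hn ->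
  0 < e -> 0 < ep -> ep <= 2 * e -> ep <= Num.sqrt Hn ->
  2 * (c * ep / (Hn * Num.sqrt Hn)) *
    Num.sqrt (m * (2 * m ^+ 2 + (8 * e ^+ 2 + 8) * m)) + 2 * (c * e / Hn) * m <= e.
Proof.
move=> c0 c1 H1 m0 mH e0 ep0 epe epH.
have q0 := sqrtr_ge0 Hn; have eq := @sqr_sqrtr _ Hn ltac:(lra).
set q := Num.sqrt Hn in q0 eq epH *.
have q1 : 1 <= q by rewrite /q -(sqrtr1 R) ler_wsqrtr.
set Z := 2 * Hn + 8 * e ^+ 2 + 8.
have Z0 : 0 <= Z by rewrite /Z; have := sqr_ge0 e; lra.
set s := Num.sqrt _.
have Hp : 0 < Hn by lra.
have hs : s <= Hn * Num.sqrt Z.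
  have -> : Hn * Num.sqrt Z = Num.sqrt (Hn ^+ 2 * Z).
    by rewrite sqrtrM ?sqrtr_sqr ?ger0_norm //; [lra | apply: sqr_ge0].
  apply: ler_wsqrtr; rewrite /Z.
  have h2 : m * m <= Hn * Hn by apply: ler_pM.
  have h3 : m * m * m <= Hn * Hn * Hn by apply: ler_pM => //; apply: mulr_ge0.
  have h4 : (8 * e ^+ 2 + 8) * (m * m) <= (8 * e ^+ 2 + 8) * (Hn * Hn).
    by apply: ler_wpM2l => //; have := sqr_ge0 e; lra.
  have -> : m * (2 * m ^+ 2 + (8 * e ^+ 2 + 8) * m) = 2 * (m * m * m) + (8 * e ^+ 2 + 8) * (m * m) by ring.
  have -> : Hn ^+ 2 * (2 * Hn + 8 * e ^+ 2 + 8) = 2 * (Hn * Hn * Hn) + (8 * e ^+ 2 + 8) * (Hn * Hn) by ring.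
  lra.
have s0 : 0 <= s by apply: sqrtr_ge0.
have z0 := sqrtr_ge0 Z; have ez := sqr_sqrtr Z0.
set z := Num.sqrt Z in hs z0 ez *.
have qp : 0 < q by lra.
have e1 : 2 * (c * ep / (Hn * q)) * s = (2 * c * ep * s) / (Hn * q).
  by field; apply/andP; split; lra.
have e2 : 2 * (c * e / Hn) * m = (2 * c * e * m) / Hn by field; lra.
rewrite e1 e2.
have t1 := @num_t1 R _ _ _ _ c0 c1 Hp m0 mH e0.
suff t2 : (2 * c * ep * s) / (Hn * q) <= e / 2 by lra.
have Hq : 0 < Hn * q by apply: mulr_gt0.
rewrite ler_pdivrMr //.
have cep : 0 <= 2 * c * ep by apply: mulr_ge0; lra.
have t3 : 2 * c * ep * s <= 2 * c * ep * (Hn * z) by apply: ler_wpM2l.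
apply: (le_trans t3).
have ep2 : ep ^+ 2 <= Hn by rewrite -eq; apply: ler_pM; lra.
have ep3 : ep ^+ 2 <= 4 * e ^+ 2.
  have := ler_pM (ltW ep0) (ltW ep0) epe epe; rewrite !expr2; lra.
have key := @num_key R _ _ _ _ _ _ c0 c1 H1 e0 ep0 ep2 ep3 ez eq.
have t4 : 2 * c * ep * z <= e / 2 * q.
  apply: num_sq => //; [by apply: mulr_ge0 | apply: mulr_ge0; lra].
have := ler_wpM2r (ltW Hp) t4.
have -> : 2 * c * ep * (Hn * z) = 2 * c * ep * z * Hn by ring.
have -> : e / 2 * (Hn * q) = e / 2 * q * Hn by ring.
by [].
Qed.

Lemma y_num (R : realType) (Hn mu2 mu m2 m1 : R) : 1 <= Hn -> 0 <= mu -> mu <= Hn ->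
  0 <= mu2 - mu ^+ 2 -> `|m2 - mu2| < 1 -> `|m1 - mu| < 1 / Hn ->
  [/\ 0 <= Num.max (m2 - m1 ^+ 2) 0, mu2 - mu ^+ 2 <= Num.max (m2 - m1 ^+ 2) 0 + 4 &
      Num.max (m2 - m1 ^+ 2) 0 <= mu2 - mu ^+ 2 + 4].
Proof.
move=> H1 mu0 muH v0; rewrite !ltr_norml => /andP[a1 a2] /andP[b1 b2].
set e := 1 / Hn in b1 b2.
have e0 : 0 < e by rewrite /e; apply: divr_gt0; lra.
have e1 : e <= 1 by rewrite /e ler_pdivrMr; lra.
have eH : e * Hn = 1.
  by rewrite /e mul1r mulVf //; apply: lt0r_neq0; lra.
set d := m1 - mu in b1 b2 *.
have -> : m1 ^+ 2 = mu ^+ 2 + (2 * (mu * d) + d * d) by rewrite /d; ring.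
have hd1 : mu * d <= mu * e.
  apply: ler_wpM2l => //; lra.
have hd2 : - (mu * e) <= mu * d by rewrite -mulrN; apply: ler_wpM2l; lra.
have hme : mu * e <= Hn * e by apply: ler_wpM2r; lra.
have hdd : d * d <= 1.
  have : `|d| <= 1 by rewrite ler_norml; apply/andP; split; lra.
  move=> h; have := ler_pM (normr_ge0 d) (normr_ge0 d) h h.
  by rewrite -normrM ger0_norm ?mulr1 //; have := sqr_ge0 d; rewrite expr2.
have hdd0 : 0 <= d * d by have := sqr_ge0 d; rewrite expr2.
rewrite mulrC in eH.
rewrite /Num.max; split; case: ifP => hc; lra.
Qed.


Section Alg.
Variables (R : realType) (S A : finType) (H : nat).
Variables (P : nat -> S -> A -> S -> R) (r : nat -> S -> A -> R).
Variables (est1 est2 : S -> A -> nat -> (S -> R) -> R -> R -> R -> dist R R).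
Variables (eps delta : R) (piinit : policy S A H).

Local Notation zeta := (QVI_zeta S A H eps delta).
Local Notation c := (@QVI_c R).
Local Notation b := (@QVI_b R).
Definition epsk (k : nat) : R := H%:R / 2 ^+ k.

Section Iter.
Variables (k : nat) (pi0 : policy S A H) (V0 : nat -> S -> R).

Definition Fy (i : 'I_H * S * A) : dist R R :=
  dbind (est1 i.1.2 i.2 i.1.1 (fun s' => V0 i.1.1.+1 s' ^+ 2) (H%:R ^+ 2) b zeta) (fun m2 =>
  dbind (est1 i.1.2 i.2 i.1.1 (V0 i.1.1.+1) H%:R (b / H%:R) zeta) (fun m1 =>
  dret (Num.max (m2 - m1 ^+ 2) 0))).

Definition eta (y : 'I_H * S * A -> R) i :=
  c * eps / (H%:R * Num.sqrt H%:R) * Num.sqrt (y i + 4 * b).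

Definition Fx (y : 'I_H * S * A -> R) (i : 'I_H * S * A) : dist R R :=
  dbind (est2 i.1.2 i.2 i.1.1 (V0 i.1.1.+1) (Num.sqrt (y i + 4 * b)) (eta y i) zeta) (fun m =>
  dret (m - eta y i)).

Definition Fg (V : nat -> S -> R) (hi : 'I_H) (sa : S * A) : dist R R :=
  dbind (est1 sa.1 sa.2 hi (fun s' => V hi.+1 s' - V0 hi.+1 s')
                  (2 * epsk k) (c * epsk k / H%:R) zeta) (fun m =>
      dret (m - c * epsk k / H%:R)).

Definition Qnew (x : 'I_H * S * A -> R) (hi : 'I_H) (g : S * A -> R) s a :=
  Num.max (r hi s a + x (hi, s, a) + g (s, a)) 0.

Definition newst (x : 'I_H * S * A -> R) (hi : 'I_H) (st : loop_t R S A H) (g : S * A -> R) : loop_t R S A H :=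
  let: (V, Q, pi) := st in
  let Qh := Qnew x hi g in
  let mx s := \big[Num.max/0]_(a : A) Qh s a in
  let am s := Order.arg_max (pi0 hi s) xpredT (Qh s) in
  ((fun h' s => if h' == hi :> nat then
                         (if mx s <= V0 hi s then V0 hi s else mx s)
                       else V h' s),
          (fun h' s a => if h' == hi :> nat then Qh s a else Q h' s a),
          (fun h' s => if h' == hi then
                         (if mx s <= V0 hi s then pi0 hi s else am s)
                       else pi h' s)).

Definition stepF (x : 'I_H * S * A -> R) (hi : 'I_H) (st : loop_t R S A H) : dist R (loop_t R S A H) :=
  let: (V, Q, pi) := st in
  dbind (drawall (Fg V hi)) (fun g => dret (newst x hi (V, Q, pi) g)).

Definition init_st : loop_t R S A H := ((fun _ _ => 0), (fun _ _ _ => 0), (fun h s => pi0 h s)).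

Definition loopd (x : 'I_H * S * A -> R) (l : seq 'I_H) :=
  foldr (fun hi acc => dbind acc (stepF x hi)) (dret init_st) l.

Definition fin (st : loop_t R S A H) : dist R (out_t R S A H) :=
  let: (V, Q, pi) := st in dret ([ffun h => [ffun s => pi h s]], V, Q).

Lemma iter_eq : QVI_iter r est1 est2 eps delta k pi0 V0 =
  dbind (drawall Fy) (fun y => dbind (drawall (Fx y)) (fun x =>
    dbind (loopd x (enum 'I_H)) fin)).
Proof.
by [].
Qed.

End Iter.
Lemma absceil (t : R) : 0 <= t ->
  t <= (`|Num.ceil t|%N)%:R < t + 1.
Proof.
move=> t0.
have c0 : (0 <= Num.ceil t)%R by rewrite ceil_ge0; lra.
have e : (`|Num.ceil t|%N%:R : R) = (Num.ceil t)%:~R by rewrite natr_absz ger0_norm.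
rewrite e; have := ceil_itv t; rewrite intrD /=. move=> /andP[h1 h2].
apply/andP; split => //; lra.
Qed.

Hypothesis eps0 : 0 < eps.
Hypothesis epsH : eps <= Num.sqrt H%:R.

Lemma H_gt0 : (0 < H)%N.
Proof.
rewrite lt0n; apply/negP => /eqP h0; move: epsH; rewrite h0 mulr0n sqrtr0. move: eps0; lra.
Qed.

Lemma H_ge1 : (1 : R) <= H%:R.
Proof. by rewrite ler1n H_gt0. Qed.

Lemma eps_le_H : eps <= H%:R.
Proof.
apply: (le_trans epsH); have h1 := H_ge1.
have q0 := sqrtr_ge0 (H%:R : R); have e := @sqr_sqrtr _ (H%:R : R) (ler0n _ _).
set q := Num.sqrt (H%:R : R) in q0 e *.
have : 1 <= q by rewrite -(sqrtr1 R) ler_wsqrtr.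
rewrite -e; nra.
Qed.

Lemma Kfacts : H%:R / eps <= 2 ^+ (QVI_K H eps - 1)%N /\
   (2 : R) ^+ (QVI_K H eps - 1)%N < 2 * (H%:R / eps).
Proof.
rewrite /QVI_K addnK.
have x1 : 1 <= H%:R / eps by rewrite ler_pdivlMr // mul1r eps_le_H.
move: (H%:R / eps) x1 => x x1.
have l2 : 0 < ln (2 : R) by apply: ln_gt0; lra.
have ex : expR (ln x) = x by rewrite lnK // posrE; lra.
have e2 : expR (ln (2 : R)) = 2 by rewrite lnK // posrE; lra.
have e2n : forall n : nat, (2 : R) ^+ n = expR (n%:R * ln 2).
  by move=> n; rewrite expRM_natl e2.
have lx : 0 <= ln x.
  rewrite leNgt; apply/negP => h.
  have : expR (ln x) < 1 by rewrite expR_lt1.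
  rewrite ex; lra.
move: (ln x) (ln (2 : R)) ex e2 e2n lx l2 => Lx L2 ex e2 e2n lx l2.
have t0 : 0 <= Lx / L2 by apply: divr_ge0 => //; lra.
have etl : Lx = (Lx / L2) * L2 by rewrite -mulrA mulVf ?mulr1 //; apply: lt0r_neq0.
move: (Lx / L2) t0 etl => t t0 etl.
have := absceil t0; set n := `|Num.ceil t|%N => /andP[h1 h2].
rewrite e2n; split.
  rewrite -[X in X <= _]ex ler_expR etl; apply: ler_wpM2r => //; lra.
have -> : 2 * x = expR (L2 + Lx) by rewrite expRD e2 ex.
rewrite ltr_expR etl.
have : n%:R * L2 < (t + 1) * L2 by rewrite ltr_pM2r.
lra.
Qed.

Lemma epsk_last : epsk (QVI_K H eps - 1) <= eps.
Proof.
have [h _] := Kfacts; move: (QVI_K H eps - 1)%N h => n h; rewrite /epsk.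
have p : (0 : R) < 2 ^+ n by apply: exprn_gt0.
have e0 := eps0.
rewrite ler_pdivrMr //; rewrite ler_pdivrMr // in h; lra.
Qed.

Lemma epsk_gt0 k : 0 < epsk k.
Proof. rewrite /epsk; apply: divr_gt0; [by rewrite ltr0n H_gt0 | exact: exprn_gt0]. Qed.

Lemma epsk_big k : (k < QVI_K H eps)%N -> eps <= 2 * epsk k.
Proof.
have [_ h] := Kfacts; move: (QVI_K H eps) h => K h kK; rewrite /epsk.
have p : (0 : R) < 2 ^+ k by apply: exprn_gt0.
have e0 := eps0.
have hk : (2 : R) ^+ k <= 2 ^+ (K - 1).
  apply: ler_weXn2l; [lra | lia].
have h' : eps * 2 ^+ (K - 1) < 2 * H%:R.
  have := h; rewrite -(ltr_pM2l e0) => h2; apply: lt_le_trans h2 _.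
  have ee : eps * (2 * (H%:R / eps)) = 2 * H%:R by field; apply: lt0r_neq0.
  by rewrite ee.
rewrite mulrA ler_pdivlMr //.
apply: le_trans (ltW h'); apply: ler_wpM2l; [lra | exact: hk].
Qed.

Hypothesis HP0 : forall h s a s', (h < H)%N -> 0 <= P h s a s'.
Hypothesis HP1 : forall h s a, (h < H)%N -> \sum_(s' : S) P h s a s' = 1.
Hypothesis r01 : forall h s a, (h < H)%N -> 0 <= r h s a <= 1.
Hypothesis spec1 : QME1_spec H P est1.
Hypothesis spec2 : QME2_spec H P est2.
Hypothesis delta01 : 0 < delta < 1.

Local Notation Vs := (Vstar H P r).
Local Notation Qs := (Qstar H P r).
Local Notation ps := (pistar P r piinit).
Local Notation PM := (Pmean P).

Lemma Vs_pistar h s : Vpi P r ps h s = Vs h s.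
Proof. by rewrite (Vstar_U HP0 HP1 r01 piinit) (Vpi_pistar HP0 HP1 r01). Qed.

Lemma Vs_ge h s : (H <= h)%N -> Vs h s = 0.
Proof. by move=> hH; rewrite -Vs_pistar Vpi_ge. Qed.

Lemma Vs_ord (i : 'I_H) s :
  Vs i s = r i s (ps i s) + PM i s (ps i s) (Vs i.+1).
Proof.
rewrite -Vs_pistar Vpi_ord; congr (_ + _); apply: PmeanE => x; exact: Vs_pistar.
Qed.

Lemma Qs_ord (i : 'I_H) s a : Qs i s a = r i s a + PM i s a (Vs i.+1).
Proof.
rewrite (Qstar_QU HP0 HP1 r01 piinit) /QU; congr (_ + _); apply: PmeanE => x.
by rewrite (Vstar_U HP0 HP1 r01 piinit).
Qed.

Lemma r_ge0 h s a : (h < H)%N -> 0 <= r h s a.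
Proof. by move=> hH; case/andP: (r01 s a hH). Qed.
Lemma r_le1 h s a : (h < H)%N -> r h s a <= 1.
Proof. by move=> hH; case/andP: (r01 s a hH). Qed.

Lemma Vs_ge0 h s : 0 <= Vs h s.
Proof. rewrite -Vs_pistar; apply: Vpi_ge0 => // ? ? ? ?; exact: r_ge0. Qed.

Lemma Vs_leH h s : Vs h s <= H%:R.
Proof.
rewrite -Vs_pistar; apply: le_trans (Vpi_le_H HP0 HP1 _ _ h s) _.
  by move=> ? ? ? ?; exact: r_le1.
by rewrite ler_nat leq_subr.
Qed.

Lemma Vpi_le_Vs (pi : policy S A H) h s : Vpi P r pi h s <= Vs h s.
Proof. exact: (le_bigmax 0 (fun pi => Vpi P r pi h s) pi). Qed.

Lemma Qpi_le_Qs (pi : policy S A H) h s a : Qpi P r pi h s a <= Qs h s a.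
Proof. exact: (le_bigmax 0 (fun pi => Qpi P r pi h s a) pi). Qed.

Lemma cons_le_Vpi (pi : policy S A H) (V : nat -> S -> R) h0 :
  (forall h s, (H <= h)%N -> V h s = 0) ->
  (forall (i : 'I_H) s, (h0 <= i)%N -> V i s <= r i s (pi i s) + PM i s (pi i s) (V i.+1)) ->
  forall h s, (h0 <= h)%N -> V h s <= Vpi P r pi h s.
Proof.
move=> HV Hc; apply: (@back_ind H) => [h hH s _|i IH s hi].
  by rewrite HV // Vpi_ge.
rewrite Vpi_ord; apply: le_trans (Hc i s hi) _; rewrite lerD2l.
apply: (Pmean_le HP0) => // x; exact: (IH x (leqW hi)).
Qed.

Lemma zeta_ge0 : 0 <= zeta.
Proof.
rewrite /QVI_zeta; apply: divr_ge0 => //; case/andP: delta01 => d0 _; exact: ltW.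
Qed.

Lemma zeta01 (i : 'I_H * S * A) : 0 < zeta < 1.
Proof.
have sp : (0 < #|S|)%N by apply/card_gt0P; exists i.1.2.
have ap : (0 < #|A|)%N by apply/card_gt0P; exists i.2.
have hp := H_gt0.
rewrite /QVI_zeta /QVI_K addn1.
move: (`|_|%N) => n.
set N := (4 * n.+1 * H * #|S| * #|A|)%N.
have Np : (0 < N)%N by rewrite /N !muln_gt0 hp sp ap.
have Nr : (1 : R) <= N%:R by rewrite ler1n.
case/andP: delta01 => d0 d1.
apply/andP; split; first by apply: divr_gt0 => //; rewrite ltr0n.
rewrite ltr_pdivrMr; last by rewrite ltr0n.
have : delta * 1 <= delta * N%:R by apply: ler_wpM2l => //; exact: ltW.
lra.
Qed.

Lemma zeta_total : (4 * QVI_K H eps * H * #|S| * #|A|)%N%:R * zeta <= delta.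
Proof.
rewrite /QVI_zeta; set N := (4 * _ * _ * _ * _)%N.
case/andP: delta01 => d0 d1.
case: (posnP N) => [->|Np]; first by rewrite mul0r; exact: ltW.
by rewrite mulrC mulfVK // pnatr_eq0 -lt0n.
Qed.

Lemma dvalid_est1 s a h f u e z : dvalid (est1 s a h f u e z).
Proof. by case: spec1 => h1 _; apply: h1. Qed.
Lemma dvalid_est2 s a h f u e z : dvalid (est2 s a h f u e z).
Proof. by case: spec2 => h1 _; apply: h1. Qed.

Definition Inv k (pi0 : policy S A H) (V0 : nat -> S -> R) : Prop :=
  (forall h s, (H <= h)%N -> V0 h s = 0) /\
  (forall (i : 'I_H) s, [/\ 0 <= V0 i s,
     V0 i s <= r i s (pi0 i s) + PM i s (pi0 i s) (V0 i.+1) &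
     Vs i s - V0 i s <= 2 * epsk k]).

Definition Post k (o : out_t R S A H) : Prop :=
  let: (pi, V, Q) := o in
  Inv k.+1 pi V /\
  (forall (i : 'I_H) s a, Q i s a <= r i s a + PM i s a (V i.+1) /\
                          Qs i s a - Q i s a <= epsk k).

Definition mkpol (pi : 'I_H -> S -> A) : policy S A H := [ffun h => [ffun s => pi h s]].

Lemma mkpolE pi (i : 'I_H) s : mkpol pi i s = pi i s.
Proof. by rewrite /mkpol !ffunE. Qed.

Lemma epskS k : 2 * epsk k.+1 = epsk k.
Proof. rewrite /epsk exprS invfM; field; apply: lt0r_neq0; apply: exprn_gt0; lra. Qed.

Section IterProof.
Variables (k : nat) (pi0 : policy S A H) (V0 : nat -> S -> R).
Hypothesis kK : (k < QVI_K H eps)%N.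
Hypothesis HInv : Inv k pi0 V0.

Lemma V0_ge h s : (H <= h)%N -> V0 h s = 0.
Proof. by case: HInv => h0 _; apply: h0. Qed.

Lemma V0_bounds h s : [/\ 0 <= V0 h s, V0 h s <= Vs h s & Vs h s - V0 h s <= 2 * epsk k].
Proof.
have ek := epsk_gt0 k.
case: (leqP H h) => hH.
  by rewrite V0_ge // Vs_ge //; split => //; lra.
have [_ HI] := HInv.
have [a1 a2 a3] := HI (Ordinal hH) s.
split => //.
apply: le_trans (Vpi_le_Vs pi0 h s).
apply: (@cons_le_Vpi pi0 V0 0) => // [h' s' ?|i s' _]; first exact: V0_ge.
by have [] := HI i s'.
Qed.

Lemma V0_ge0 h s : 0 <= V0 h s. Proof. by case: (V0_bounds h s). Qed.
Lemma V0_leH h s : V0 h s <= H%:R.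
Proof. case: (V0_bounds h s) => _ h1 _; exact: le_trans h1 (Vs_leH h s). Qed.

Definition err (y : 'I_H * S * A -> R) i := 2 * eta y i + 2 * (c * epsk k / H%:R).

Definition errN y (h : nat) s a := oapp (fun i : 'I_H => err y (i, s, a)) 0 (insub h).
Lemma errN_ord y (i : 'I_H) s a : errN y i s a = err y (i, s, a).
Proof. by rewrite /errN valK. Qed.

Definition Ey (i : 'I_H * S * A) (v : R) : Prop :=
  [/\ 0 <= v, Pvar P i.1.1 i.1.2 i.2 (V0 i.1.1.+1) <= v + 4 &
      v <= Pvar P i.1.1 i.1.2 i.2 (V0 i.1.1.+1) + 4].

Definition Ex y (i : 'I_H * S * A) (v : R) : Prop :=
  PM i.1.1 i.1.2 i.2 (V0 i.1.1.+1) - 2 * eta y i <= v /\ v <= PM i.1.1 i.1.2 i.2 (V0 i.1.1.+1).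

Definition Eg (V : nat -> S -> R) (hi : 'I_H) (sa : S * A) (v : R) : Prop :=
  PM hi sa.1 sa.2 (fun s' => V hi.+1 s' - V0 hi.+1 s') - 2 * (c * epsk k / H%:R) <= v /\
  v <= PM hi sa.1 sa.2 (fun s' => V hi.+1 s' - V0 hi.+1 s').

Definition LI y (h0 : nat) (st : loop_t R S A H) : Prop :=
  let: (V, Q, pi) := st in
  (forall h s, (H <= h)%N -> V h s = 0) /\
  (forall (i : 'I_H) s, (h0 <= i)%N ->
     [/\ V0 i s <= V i s, V i s <= r i s (pi i s) + PM i s (pi i s) (V i.+1) &
     forall a, [/\ Q i s a <= V i s, Q i s a <= r i s a + PM i s a (V i.+1) &
                r i s a + PM i s a (V i.+1) - err y (i, s, a) <= Q i s a]]).

Lemma LI_V0 y h0 V Q pi : LI y h0 (V, Q, pi) ->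
  forall h s, (h0 <= h)%N -> V0 h s <= V h s.
Proof.
case=> HV HI h s hh; case: (leqP H h) => hH; first by rewrite HV // V0_ge.
by have [] := HI (Ordinal hH) s hh.
Qed.

Lemma LI_Vs y h0 V Q pi : LI y h0 (V, Q, pi) ->
  forall h s, (h0 <= h)%N -> V h s <= Vs h s.
Proof.
move=> hL h s hh; apply: le_trans (Vpi_le_Vs (mkpol pi) h s).
case: hL => HV HI.
apply: (@cons_le_Vpi (mkpol pi) V h0) => // i s' hi.
by rewrite mkpolE; have [] := HI i s' hi.
Qed.

Lemma Pvar_ge0' h s a f : (h < H)%N -> 0 <= Pvar P h s a f.
Proof. move=> hH; exact: (Pvar_ge0 HP0 HP1). Qed.

Lemma ystep_det (i : 'I_H * S * A) m2 m1 :
  `|m2 - PM i.1.1 i.1.2 i.2 (fun s' => V0 i.1.1.+1 s' ^+ 2)| < b ->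
  `|m1 - PM i.1.1 i.1.2 i.2 (V0 i.1.1.+1)| < b / H%:R ->
  Ey i (Num.max (m2 - m1 ^+ 2) 0).
Proof.
rewrite /QVI_b => h1 h2.
have hH : (i.1.1 < H)%N by [].
have mu0 : 0 <= PM i.1.1 i.1.2 i.2 (V0 i.1.1.+1).
  by apply: (Pmean_ge0 HP0 HP1) => // x; apply: V0_ge0.
have muH : PM i.1.1 i.1.2 i.2 (V0 i.1.1.+1) <= H%:R.
  by apply: (Pmean_le_const HP0 HP1) => // x; apply: V0_leH.
have v0 := Pvar_ge0' i.1.2 i.2 (V0 i.1.1.+1) hH.
rewrite /Pvar in v0.
have [a1 a2 a3] := @y_num R _ _ _ _ _ H_ge1 mu0 muH v0 h1 h2.
by split.
Qed.

Lemma xstep_det y (i : 'I_H * S * A) m :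
  `|m - PM i.1.1 i.1.2 i.2 (V0 i.1.1.+1)| < eta y i -> Ex y i (m - eta y i).
Proof. rewrite ltr_norml /Ex => /andP[h1 h2]; split; lra. Qed.

Lemma gstep_det V (hi : 'I_H) (sa : S * A) m :
  `|m - PM hi sa.1 sa.2 (fun s' => V hi.+1 s' - V0 hi.+1 s')| < c * epsk k / H%:R ->
  Eg V hi sa (m - c * epsk k / H%:R).
Proof. rewrite ltr_norml /Eg => /andP[h1 h2]; split; lra. Qed.

Lemma LI_V_ge0 y h0 V Q pi : LI y h0 (V, Q, pi) ->
  forall h s, (h0 <= h)%N -> 0 <= V h s.
Proof. move=> hL h s hh; apply: le_trans (LI_V0 hL s hh); exact: V0_ge0. Qed.

Lemma Qnew_bounds y x (hi : 'I_H) V g s a :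
  (forall i, Ex y i (x i)) -> (forall sa, Eg V hi sa (g sa)) ->
  (forall s', 0 <= V hi.+1 s') ->
  [/\ 0 <= Qnew x hi g s a, Qnew x hi g s a <= r hi s a + PM hi s a (V hi.+1) &
      r hi s a + PM hi s a (V hi.+1) - err y (hi, s, a) <= Qnew x hi g s a].
Proof.
move=> Hx Hg Vp.
have [x1 x2] := Hx (hi, s, a); have [g1 g2] := Hg (s, a).
rewrite /= (PmeanB P) in g1 g2.
have r0 := r_ge0 s a (ltn_ord hi).
have pv : 0 <= PM hi s a (V hi.+1) by apply: (Pmean_ge0 HP0 HP1).
rewrite /Qnew /err /Num.max; split; case: ifP => hc //; lra.
Qed.

Lemma step_det y x (hi : 'I_H) V Q pi g :
  (forall i, Ex y i (x i)) -> LI y hi.+1 (V, Q, pi) ->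
  (forall sa, Eg V hi sa (g sa)) -> LI y hi (newst pi0 V0 x hi (V, Q, pi) g).
Proof.
move=> Hx hL Hg; have [HV HI] := hL.
have Vp : forall s', 0 <= V hi.+1 s' by move=> s'; apply: (LI_V_ge0 hL).
have V0V : forall s', V0 hi.+1 s' <= V hi.+1 s' by move=> s'; apply: (LI_V0 hL).
rewrite /newst /=; split.
  move=> h s hH; have -> : (h == hi) = false.
    by apply/negbTE; apply: contraTneq hH => ->; rewrite -ltnNge.
  exact: HV.
move=> i s hi_le.
have nS : (i.+1 == hi) = false.
  by apply/negbTE; apply: contraTneq hi_le => <-; rewrite -ltnNge.
rewrite nS.
case: (eqVneq (i : nat) hi) => [eih|nih]; last first.
  have hi1 : (hi.+1 <= i)%N by rewrite ltn_neqAle eq_sym nih hi_le.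
  have nO : (i == hi) = false by apply/negbTE; apply: contraNneq nih => ->.
  rewrite nO. exact: HI i s hi1.
have ei : i = hi by apply: val_inj.
subst i; rewrite eqxx.
set Qh := Qnew x hi g.
have QB := fun s a => @Qnew_bounds y x hi V g s a Hx Hg Vp.
set mx := \big[Num.max/0]_(a : A) Qh s a.
have Qmx : forall a, Qh s a <= mx by move=> a; exact: (le_bigmax 0 (Qh s) a).
set am := Order.arg_max (pi0 hi s) xpredT (Qh s).
have mxe : mx = Qh s am.
  apply: bigmax_eq; last by case: (QB s am).
  by move=> a; rewrite /am; case: (@arg_maxP _ _ _ (pi0 hi s) xpredT (Qh s)) => // j _; apply.
have [_ HI0] := HInv; have [v0 v1 v2] := HI0 hi s.
have PV0V : forall a, PM hi s a (V0 hi.+1) <= PM hi s a (V hi.+1).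
  by move=> a; apply: (Pmean_le HP0).
split.
- by case: ifP => // /negbT; rewrite -ltNge => /ltW.
- case: ifP => hc.
    by apply: (le_trans v1); rewrite lerD2l.
  by rewrite mxe; case: (QB s am).
- move=> a; have [q0 q1 q2] := QB s a; split => //.
  case: ifP => hc; last exact: Qmx.
  by apply: le_trans (Qmx a) hc.
Qed.

Lemma DV y V Q pi : LI y 0 (V, Q, pi) ->
  forall h s, Vs h s - V h s <= Vpi P (errN y) ps h s.
Proof.
case=> HV HI; apply: (@back_ind H) => [h hH s|i IH s].
  by rewrite Vs_ge // HV // Vpi_ge // subr0.
rewrite Vs_ord Vpi_ord errN_ord.
have [_ _ h3] := HI i s (leq0n _); have [q1 _ q3] := h3 (ps i s).
have : PM i s (ps i s) (fun x => Vs i.+1 x - V i.+1 x) <= PM i s (ps i s) (Vpi P (errN y) ps i.+1).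
  exact: (Pmean_le HP0).
rewrite (PmeanB P); lra.
Qed.

Lemma DQ y V Q pi : LI y 0 (V, Q, pi) ->
  forall (i : 'I_H) s a, Qs i s a - Q i s a <= Qv P ps (errN y) i s a.
Proof.
move=> hL i s a; have [HV HI] := hL.
rewrite Qs_ord /Qv errN_ord.
have [_ _ h3] := HI i s (leq0n _); have [q1 _ q3] := h3 a.
have : PM i s a (fun x => Vs i.+1 x - V i.+1 x) <= PM i s a (Vpi P (errN y) ps i.+1).
  apply: (Pmean_le HP0) => // x; exact: (DV hL).
rewrite (PmeanB P); lra.
Qed.

Definition sigS h s a := Pvar P h s a (Vpi P r ps h.+1).
Definition fN h s a := 2 * sigS h s a + (8 * epsk k ^+ 2 + 8).

Lemma fN_ge0 h s a : (h < H)%N -> 0 <= fN h s a.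
Proof.
move=> hH; rewrite /fN /sigS; have := Pvar_ge0' s a (Vpi P r ps h.+1) hH.
have := sqr_ge0 (epsk k); lra.
Qed.

Lemma errN_le y : (forall i, Ey i (y i)) ->
  forall h s a, (h < H)%N ->
  errN y h s a <= 2 * (c * eps / (H%:R * Num.sqrt H%:R)) * Num.sqrt (fN h s a)
                  + 2 * (c * epsk k / H%:R).
Proof.
move=> Hy h s a hH.
have -> : h = Ordinal hH by [].
rewrite errN_ord /err /eta.
have g0 : 0 <= c * eps / (H%:R * Num.sqrt H%:R).
  apply: divr_ge0; first by apply: mulr_ge0; rewrite /QVI_c; [lra | exact: ltW eps0].
  by apply: mulr_ge0 => //; apply: sqrtr_ge0.
suff hs : Num.sqrt (y (Ordinal hH, s, a) + 4 * b) <= Num.sqrt (fN h s a).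
  have := ler_wpM2l g0 hs; lra.
apply: ler_wsqrtr; rewrite /QVI_b mulr1.
have [_ _ ey] := Hy (Ordinal hH, s, a); move: ey => /= ey.
have sp := Pvar_split HP0 HP1 s a hH (V0 h.+1) (Vpi P r ps h.+1).
have l2 := Pvar_le2 P h s a (fun x => V0 h.+1 x - Vpi P r ps h.+1 x).
have l3 : PM h s a (fun x => (V0 h.+1 x - Vpi P r ps h.+1 x) ^+ 2) <= (2 * epsk k) ^+ 2.
  apply: (Pmean_le_const HP0 HP1) => // x.
  rewrite Vs_pistar; have [b0 b1 b2] := V0_bounds h.+1 x.
  have ek := epsk_gt0 k.
  rewrite -[X in X <= _]ger0_norm ?sqr_ge0 // -[X in _ <= X]ger0_norm ?sqr_ge0 //.
  by rewrite !normrX; apply: lerXn2r; rewrite ?nnegrE ?normr_ge0 //; rewrite ler_norml; apply/andP; split; rewrite ger0_norm; lra.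
rewrite /fN /sigS; lra.
Qed.

Lemma QB y : (forall i, Ey i (y i)) ->
  forall (i : 'I_H) s a, Qv P ps (errN y) i s a <= epsk k.
Proof.
move=> Hy i s a.
set al := 2 * (c * eps / (H%:R * Num.sqrt H%:R)).
set be := 2 * (c * epsk k / H%:R).
have s1 := Qv_le HP0 ps (errN_le Hy) i s a.
rewrite (Qv_affine HP1 ps al be (fun h s a => Num.sqrt (fN h s a))) in s1.
have s4 := cs_Q HP0 HP1 ps fN_ge0 i s a.
have s5 := Qv_affine HP1 ps 2 (8 * epsk k ^+ 2 + 8) sigS i s a.
have s6 := tv_Q HP0 HP1 ps r01 i s a.
rewrite -/(fN) in s5.
have al0 : 0 <= al.
  rewrite /al; apply: mulr_ge0 => //; apply: divr_ge0.
    by apply: mulr_ge0; rewrite /QVI_c; [lra | exact: ltW eps0].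
  by apply: mulr_ge0 => //; apply: sqrtr_ge0.
set m := ((H - i)%N)%:R : R.
have m0 : 0 <= m by [].
have mH : m <= H%:R by rewrite /m ler_nat leq_subr.
have s7 : Num.sqrt (m * Qv P ps fN i s a) <=
          Num.sqrt (m * (2 * m ^+ 2 + (8 * epsk k ^+ 2 + 8) * m)).
  apply: ler_wsqrtr; apply: ler_wpM2l => //; rewrite s5.
  rewrite [_ * m]mulrC; rewrite lerD2r; apply: ler_wpM2l => //.
have fin := @final_num R c H%:R m (epsk k) eps ltac:(rewrite /QVI_c; lra)
  ltac:(rewrite /QVI_c; lra) H_ge1 m0 mH (epsk_gt0 k) eps0 (epsk_big kK) epsH.
rewrite -/al -/be in fin.
have := ler_wpM2l al0 (le_trans s4 s7).
lra.
Qed.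

Lemma post_det y V Q pi : (forall i, Ey i (y i)) -> LI y 0 (V, Q, pi) ->
  Post k (mkpol pi, V, Q).
Proof.
move=> Hy hL; have [HV HI] := hL.
split; [split|].
- exact: HV.
- move=> i s; have [a1 a2 a3] := HI i s (leq0n _); split.
  + exact: (LI_V_ge0 hL s (leq0n _)).
  + by rewrite mkpolE.
  + have := DV hL i s; rewrite (Vpi_Qv P ps (errN y) i s).
    have := QB Hy i s (ps i s); rewrite epskS; lra.
- move=> i s a; have [_ _ a3] := HI i s (leq0n _); have [q1 q2 q3] := a3 a.
  split => //; have := DQ hL i s a; have := QB Hy i s a; lra.
Qed.

Lemma dvalid_Fy i : dvalid (Fy V0 i).
Proof.
apply: dvalid_bind => [|m2]; first exact: dvalid_est1.
apply: dvalid_bind => [|m1]; [exact: dvalid_est1 | exact: dvalid_ret].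
Qed.

Lemma dvalid_Fx y i : dvalid (Fx V0 y i).
Proof. apply: dvalid_bind => [|m]; [exact: dvalid_est2 | exact: dvalid_ret]. Qed.

Lemma dvalid_Fg V hi sa : dvalid (Fg k V0 V hi sa).
Proof. apply: dvalid_bind => [|m]; [exact: dvalid_est1 | exact: dvalid_ret]. Qed.

Lemma Fy_ok i : 1 - (zeta + zeta) <= prob (Fy V0 i) (fun v => `[< Ey i v >]).
Proof.
have zz := zeta01 i; have [z0 z1] := andP zz.
have hH : (i.1.1 < H)%N by [].
case: spec1 => _ sp.
rewrite -[zeta in X in _ - (_ + X)]addr0.
have b0 : 0 < b by rewrite /QVI_b; lra.
have bH : 0 < b / H%:R by apply: divr_gt0 => //; rewrite ltr0n H_gt0.
have rg1 : forall s', 0 <= V0 i.1.1.+1 s' ^+ 2 <= H%:R ^+ 2.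
  move=> s'; apply/andP; split; first exact: sqr_ge0.
  apply: lerXn2r; rewrite ?nnegrE ?ler0n ?V0_ge0 //; exact: V0_leH.
have rg2 : forall s', 0 <= V0 i.1.1.+1 s' <= H%:R.
  by move=> s'; apply/andP; split; [exact: V0_ge0 | exact: V0_leH].
apply: (prob_bind_ge (G := fun m2 =>
   `|m2 - PM i.1.1 i.1.2 i.2 (fun s' => V0 i.1.1.+1 s' ^+ 2)| < b)).
- exact: dvalid_est1.
- move=> m2; apply: dvalid_nn; apply: dvalid_bind => [|m1]; [exact: dvalid_est1 | exact: dvalid_ret].
- lra.
- by apply: ltW; apply: sp.
move=> m2 hm2.
apply: (prob_bind_ge (G := fun m1 =>
   `|m1 - PM i.1.1 i.1.2 i.2 (V0 i.1.1.+1)| < b / H%:R)).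
- exact: dvalid_est1.
- move=> m1; apply: dvalid_nn; exact: dvalid_ret.
- lra.
- by apply: ltW; apply: sp.
move=> m1 hm1; apply: prob_ret_ge => //.
by apply/asboolP; apply: ystep_det.
Qed.

Lemma gamma_bounds : 0 < c * eps / (H%:R * Num.sqrt H%:R) <= c.
Proof.
have h1 := H_ge1; have q0 := sqrtr_ge0 (H%:R : R).
have q1 : 1 <= Num.sqrt (H%:R : R).
  rewrite -{1}(sqrtr1 R); apply: ler_wsqrtr; exact: H_ge1.
have Hq : 1 <= H%:R * Num.sqrt (H%:R : R).
  by have := ler_pM ler01 ler01 h1 q1; rewrite mul1r.
have e0 := eps0; have eH := epsH.
apply/andP; split.
  apply: divr_gt0; [apply: mulr_gt0 => //; rewrite /QVI_c; lra | lra].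
rewrite ler_pdivrMr; last lra.
apply: ler_wpM2l; first by rewrite /QVI_c; lra.
apply: le_trans eH _; rewrite -[X in X <= _]mul1r; apply: ler_wpM2r => //.
Qed.

Lemma Fx_ok y i : (forall j, Ey j (y j)) ->
  1 - (zeta + 0) <= prob (Fx V0 y i) (fun v => `[< Ex y i v >]).
Proof.
move=> Hy.
have zz := zeta01 i; have [z0 z1] := andP zz.
have hH : (i.1.1 < H)%N by [].
case: spec2 => _ sp.
have [y0 y1 y2] := Hy i.
have b4 : 0 < y i + 4 * b by rewrite /QVI_b; lra.
have sg0 : 0 < Num.sqrt (y i + 4 * b) by rewrite sqrtr_gt0.
have v1 : Pvar P i.1.1 i.1.2 i.2 (V0 i.1.1.+1) <= Num.sqrt (y i + 4 * b) ^+ 2.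
  rewrite sqr_sqrtr; last exact: ltW b4.
  by move: y1; rewrite /QVI_b mulr1.
have [g0 g1] := andP gamma_bounds.
have et : 0 < eta y i < 4 * Num.sqrt (y i + 4 * b).
  rewrite /eta; apply/andP; split; first exact: mulr_gt0.
  rewrite ltr_pM2r //; apply: le_lt_trans g1 _; rewrite /QVI_c; lra.
apply: (prob_bind_ge (G := fun m =>
   `|m - PM i.1.1 i.1.2 i.2 (V0 i.1.1.+1)| < eta y i)).
- exact: dvalid_est2.
- move=> m; apply: dvalid_nn; exact: dvalid_ret.
- lra.
- by apply: ltW; apply: sp.
move=> m hm; apply: prob_ret_ge => //.
by apply/asboolP; apply: xstep_det.
Qed.

Lemma Fg_ok y V Q pi (hi : 'I_H) sa : LI y hi.+1 (V, Q, pi) ->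
  1 - (zeta + 0) <= prob (Fg k V0 V hi sa) (fun v => `[< Eg V hi sa v >]).
Proof.
move=> hL.
have zz := zeta01 (hi, sa.1, sa.2); have [z0 z1] := andP zz.
case: spec1 => _ sp.
have ek := epsk_gt0 k.
have ce : 0 < c * epsk k / H%:R.
  apply: divr_gt0; [apply: mulr_gt0 => //; rewrite /QVI_c; lra | by rewrite ltr0n H_gt0].
have rg : forall s', 0 <= V hi.+1 s' - V0 hi.+1 s' <= 2 * epsk k.
  move=> s'; have h1 := LI_V0 hL s' (leqnn _); have h2 := LI_Vs hL s' (leqnn _).
  have [_ _ h3] := V0_bounds hi.+1 s'.
  apply/andP; split; lra.
apply: (prob_bind_ge (G := fun m =>
   `|m - PM hi sa.1 sa.2 (fun s' => V hi.+1 s' - V0 hi.+1 s')| < c * epsk k / H%:R)).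
- exact: dvalid_est1.
- move=> m; apply: dvalid_nn; exact: dvalid_ret.
- lra.
- by apply: ltW; apply: sp.
move=> m hm; apply: prob_ret_ge => //.
by apply/asboolP; apply: gstep_det.
Qed.

Lemma dvalid_stepF x hi st : dvalid (stepF k pi0 V0 x hi st).
Proof.
case: st => [[V Q] pi] /=; apply: dvalid_bind => [|g]; last exact: dvalid_ret.
apply: dvalid_drawall => sa; exact: dvalid_Fg.
Qed.

Lemma dvalid_loopd x l : dvalid (loopd k pi0 V0 x l).
Proof.
elim: l => [|hi l IH] /=; first exact: dvalid_ret.
apply: dvalid_bind => // st; exact: dvalid_stepF.
Qed.

Lemma step_ok y x (hi : 'I_H) V Q pi : (forall i, Ex y i (x i)) -> LI y hi.+1 (V, Q, pi) ->
  1 - (#|{: S * A}|%:R * zeta + 0) <=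
  prob (stepF k pi0 V0 x hi (V, Q, pi)) (fun st => `[< LI y hi st >]).
Proof.
move=> Hx hL; rewrite /stepF.
apply: (prob_bind_ge (G := fun g => [forall sa, `[< Eg V hi sa (g sa) >]])).
- apply: dvalid_drawall => sa; exact: dvalid_Fg.
- move=> g; apply: dvalid_nn; exact: dvalid_ret.
- by [].
- apply: (drawall_ge (E := fun sa v => `[< Eg V hi sa v >])).
  + exact: zeta_ge0.
  + move=> sa; exact: dvalid_Fg.
  + by move=> sa; have := Fg_ok sa hL; rewrite addr0.
move=> g /forallP Hg; apply: prob_ret_ge => //; apply/asboolP.
by apply: step_det => // sa; apply/asboolP; apply: Hg.
Qed.

Lemma loop_ok y x : (forall i, Ex y i (x i)) ->
  forall n, (n <= H)%N ->
  1 - n%:R * (#|{: S * A}|%:R * zeta) <=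
  prob (loopd k pi0 V0 x (drop (H - n) (enum 'I_H))) (fun st => `[< LI y (H - n) st >]).
Proof.
move=> Hx; elim=> [|n IH] nH.
  rewrite subn0 drop_oversize ?size_enum_ord // mul0r subr0 /loopd /=.
  rewrite prob_ret; suff -> : `[< LI y H (init_st pi0) >] = true by [].
  apply/asboolP; split => // i s.
  by rewrite leqNgt ltn_ord.
have h0 : (H - n.+1 < H)%N by have := H_gt0; lia.
have e1 : (H - n.+1).+1 = (H - n)%N by lia.
rewrite (drop_nth (Ordinal h0)) ?size_enum_ord // /=.
have -> : nth (Ordinal h0) (enum 'I_H) (H - n.+1) = Ordinal h0.
  by apply: val_inj; rewrite /= nth_enum_ord.
rewrite e1.
have -> : 1 - n.+1%:R * (#|{: S * A}|%:R * zeta) =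
          1 - (n%:R * (#|{: S * A}|%:R * zeta) + (#|{: S * A}|%:R * zeta + 0)).
  by rewrite -addn1 natrD; ring.
apply: (prob_bind_ge (G := fun st => `[< LI y (H - n) st >])).
- exact: dvalid_loopd.
- move=> st; apply: dvalid_nn; exact: dvalid_stepF.
- by rewrite addr0; apply: mulr_ge0 => //; exact: zeta_ge0.
- by apply: IH; apply: ltnW.
move=> [[V Q] pi] /asboolP hL.
apply: step_ok => //=; by rewrite e1.
Qed.

Lemma dvalid_fin st : dvalid (fin st).
Proof. case: st => [[V Q] pi]; exact: dvalid_ret. Qed.

Lemma iter_ok :
  1 - (4 * H * #|S| * #|A|)%N%:R * zeta <=
  prob (QVI_iter r est1 est2 eps delta k pi0 V0) (fun o => `[< Post k o >]).
Proof.
rewrite iter_eq.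
set N := #|{: 'I_H * S * A}|.
set M := #|{: S * A}|.
have eN : (N%:R : R) = H%:R * #|S|%:R * #|A|%:R by rewrite /N !card_prod card_ord !natrM.
have eM : (M%:R : R) = #|S|%:R * #|A|%:R by rewrite /M card_prod natrM.
have z0 := zeta_ge0.
have -> : 1 - (4 * H * #|S| * #|A|)%N%:R * zeta =
  1 - (N%:R * (zeta + zeta) + (N%:R * (zeta + 0) + (H%:R * (M%:R * zeta) + 0))).
  by rewrite eN eM !natrM; ring.
have dv : forall x, dvalid (dbind (loopd k pi0 V0 x (enum 'I_H)) fin).
  move=> x; apply: dvalid_bind => [|st]; [exact: dvalid_loopd | exact: dvalid_fin].
apply: (prob_bind_ge (G := fun y => [forall i, `[< Ey i (y i) >]])).
- apply: dvalid_drawall => i; exact: dvalid_Fy.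
- move=> y; apply: dvalid_nn; apply: dvalid_bind => [|x]; last exact: dv x.
  apply: dvalid_drawall => i; exact: dvalid_Fx.
- apply: addr_ge0; first by apply: mulr_ge0; [exact: ler0n | lra].
  by rewrite addr0; apply: mulr_ge0 => //; apply: mulr_ge0.
- apply: (drawall_ge (E := fun i v => `[< Ey i v >])).
  + lra.
  + move=> i; exact: dvalid_Fy.
  + move=> i; exact: Fy_ok.
move=> y /forallP Hy'.
have Hy : forall i, Ey i (y i) by move=> i; apply/asboolP; apply: Hy'.
apply: (prob_bind_ge (G := fun x => [forall i, `[< Ex y i (x i) >]])).
- apply: dvalid_drawall => i; exact: dvalid_Fx.
- move=> x; apply: dvalid_nn; exact: dv x.
- by rewrite addr0; apply: mulr_ge0 => //; apply: mulr_ge0.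
- apply: (drawall_ge (E := fun i v => `[< Ex y i v >])).
  + lra.
  + move=> i; exact: dvalid_Fx.
  + move=> i; have := Fx_ok i Hy; by rewrite addr0.
move=> x /forallP Hx'.
have Hx : forall i, Ex y i (x i) by move=> i; apply/asboolP; apply: Hx'.
apply: (prob_bind_ge (G := fun st => `[< LI y 0 st >])).
- exact: dvalid_loopd.
- move=> st; apply: dvalid_nn; exact: dvalid_fin.
- by [].
- by have := loop_ok Hx (leqnn H); rewrite subnn drop0.
move=> [[V Q] pi] /asboolP hL; apply: prob_ret_ge => //; apply/asboolP.
exact: post_det.
Qed.

End IterProof.

Local Notation E := ((4 * H * #|S| * #|A|)%N%:R * zeta).

Lemma Inv0 : Inv 0 piinit (fun _ _ => 0).
Proof.
split => // i s; split => //.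
- rewrite (Pmean_const HP1) // addr0; exact: r_ge0.
- rewrite subr0 /epsk expr0 divr1; have := Vs_leH i s; have := H_ge1; lra.
Qed.

Lemma dvalid_iter k (pi : policy S A H) (V : nat -> S -> R) : dvalid (QVI_iter r est1 est2 eps delta k pi V).
Proof.
rewrite iter_eq; apply: dvalid_bind => [|y].
  apply: dvalid_drawall => i; exact: dvalid_Fy.
apply: dvalid_bind => [|x]; first by apply: dvalid_drawall => i; exact: dvalid_Fx.
apply: dvalid_bind => [|st]; [exact: dvalid_loopd | exact: dvalid_fin].
Qed.

Lemma dvalid_run k : dvalid (QVI_run r est1 est2 eps delta piinit k).
Proof.
elim: k => [|k IH] /=; first exact: dvalid_ret.
apply: dvalid_bind => // -[[pi V] Q]; exact: dvalid_iter.
Qed.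

Lemma E_ge0 : 0 <= E.
Proof. apply: mulr_ge0 => //; exact: zeta_ge0. Qed.

Lemma run_ok k : (k <= QVI_K H eps)%N ->
  1 - k%:R * E <= prob (QVI_run r est1 est2 eps delta piinit k)
                       (fun o => `[< Inv k o.1.1 o.1.2 >]).
Proof.
elim: k => [|k IH] kK.
  rewrite mul0r subr0 /=; rewrite prob_ret.
  suff -> : `[< Inv 0 piinit (fun _ _ => 0) >] = true by [].
  apply/asboolP; exact: Inv0.
have kK' : (k < QVI_K H eps)%N by [].
rewrite /=.
have -> : 1 - k.+1%:R * E = 1 - (k%:R * E + E) by rewrite -addn1 natrD; ring.
apply: (prob_bind_ge (G := fun o => `[< Inv k o.1.1 o.1.2 >])).
- exact: dvalid_run.
- move=> -[[pi V] Q]; apply: dvalid_nn; exact: dvalid_iter.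
- exact: E_ge0.
- by apply: IH; apply: ltnW.
move=> -[[pi V] Q] /asboolP /= hI.
apply: le_trans (iter_ok kK' hI) _.
apply: prob_mono; first by apply: dvalid_nn; exact: dvalid_iter.
move=> -[[pi' V'] Q'] /asboolP [h1 _]; apply/asboolP; exact: h1.
Qed.

Lemma post_good o : Post (QVI_K H eps - 1) o -> QVI_good P r eps o.
Proof.
case: o => [[hpi hV] hQ] [[HV HI] HQ].
have el := epsk_last.
have ee : 2 * epsk (QVI_K H eps - 1).+1 <= eps by rewrite epskS.
move: (QVI_K H eps - 1)%N ee el HI HQ => K1 ee el HI HQ.
have Vle : forall h s, hV h s <= Vpi P r hpi h s.
  move=> h s; apply: (@cons_le_Vpi hpi hV 0) => // i s' _.
  by have [] := HI i s'.
apply/forallP => h; apply/forallP => s.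
have [v0 v1 v2] := HI h s.
apply/andP; split; [apply/andP; split; [apply/andP; split|] | apply/forallP => a].
- lra.
- exact: Vle.
- exact: Vpi_le_Vs.
have [q1 q2] := HQ h s a.
apply/andP; split; [apply/andP; split|].
- lra.
- apply: le_trans q1 _; rewrite /Qpi lerD2l.
  by apply: (Pmean_le HP0) => // x; apply: Vle.
- exact: Qpi_le_Qs.
Qed.

Theorem main_thm : 1 - delta <= prob (QVI4 r est1 est2 eps delta piinit) (QVI_good P r eps).
Proof.
rewrite /QVI4.
have K1 : (0 < QVI_K H eps)%N by rewrite /QVI_K addn1.
have hrun := run_ok (leq_pred (QVI_K H eps)).
have tot := zeta_total.
have hit : forall pi V, Inv (QVI_K H eps).-1 pi V ->
    1 - E <= prob (QVI_iter r est1 est2 eps delta (QVI_K H eps).-1 pi V) (QVI_good P r eps).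
  move=> pi V hI.
  have kK : ((QVI_K H eps).-1 < QVI_K H eps)%N by rewrite prednK.
  apply: le_trans (iter_ok kK hI) _.
  apply: prob_mono; first by apply: dvalid_nn; exact: dvalid_iter.
  move=> o /asboolP hP; apply: post_good; by rewrite subn1.
move: hrun hit tot; case eq: (QVI_K H eps) K1 => [//|n] _ /= hrun hit tot.
have tot' : (n.+1%:R : R) * E <= delta.
  have : (4 * n.+1 * H * #|S| * #|A|)%N%:R * zeta = n.+1%:R * E by rewrite !natrM; ring.
  lra.
apply: le_trans (_ : 1 - (n%:R * E + E) <= _).
  move: tot'; rewrite -addn1 natrD; lra.
apply: (prob_bind_ge (G := fun o => `[< Inv n o.1.1 o.1.2 >])).
- exact: dvalid_run.
- move=> -[[pi V] Q]; apply: dvalid_nn; exact: dvalid_iter.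
- exact: E_ge0.
- exact: hrun.
move=> -[[pi V] Q] /asboolP /= hI; exact: hit.
Qed.

End Alg.

End QVIProof.

Theorem theorem4p5 (R : realType) (S A : finType) (H : nat)
  (P : nat -> S -> A -> S -> R) (r : nat -> S -> A -> R)
  (est1 est2 : S -> A -> nat -> (S -> R) -> R -> R -> R -> dist R R)
  (eps delta : R) (piinit : policy S A H) :
  (forall h s a s', (h < H)%N -> 0 <= P h s a s') ->
  (forall h s a, (h < H)%N -> \sum_(s' : S) P h s a s' = 1) ->
  (forall h s a, (h < H)%N -> 0 <= r h s a <= 1) ->
  QME1_spec H P est1 -> QME2_spec H P est2 ->
  0 < eps -> eps <= Num.sqrt H%:R -> 0 < delta < 1 ->
  1 - delta <= prob (QVI4 r est1 est2 eps delta piinit) (QVI_good P r eps).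
Proof.
move=> HP0 HP1 r01 s1 s2 e0 eH d01.
exact: (QVIProof.main_thm piinit e0 eH HP0 HP1 r01 s1 s2 d01).
Qed.
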